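(* Let $\Lambda\subset\mathbb Z^{2n+1}$ be a subgroup of rank at most $n-1$ with basis matrix $M(\Lambda)=(A\,|\,B\,|\,c)$, and let $V(\Lambda)$ be the associated variety of gluing equation type. Suppose $d=(d_1,\ldots,d_n)$ is a degeneration vector that is totally positive, i.e. $d_i>0$ for all $i$. If $A$ has rank $n-1$, then $d$ is genuine.
   Context: Let $\mathbb C^{*\bullet}=\mathbb C\setminus\{0,1\}$. For a subgroup $\Lambda\subset\mathbb Z^{2n+1}$, $V(\Lambda)\subset(\mathbb C^{*\bullet})^n$ is the set of points $(z_1,\ldots,z_n)$ with $z_1^{a_1}\cdots z_n^{a_n}(1-z_1)^{b_1}\cdots(1-z_n)^{b_n}=(-1)^c$ for all $(a_1,\ldots,a_n,b_1,\ldots,b_n,c)\in\Lambda$; when $\mathrm{rank}\,\Lambda\le n-1$ it is called a variety of gluing equation type. $M(\Lambda)$ is a matrix whose rows form a $\mathbb Z$-basis of $\Lambda$, written as $(A|B|c)$ with $A,B$ of size $r\times n$ and $c$ a column. Let $\overline V$ be the closure of $V(\Lambda)$ in $(\mathbb C\setminus\{1\})^n$; points of $\overline V\setminus V$ are ideal points. A degeneration vector is a nonzero $d\in\ker(A)\cap(\mathbb Z_{\ge0})^n$. It is genuine if there is an ideal point $p$ and a holomorphic map $f$ from the open unit disc, $f:(\mathbb D,0)\to(\overline V,p)$ with $f(\mathbb D\setminus\{0\})\subset V(\Lambda)$, whose coordinates have the form $z_i=t^{d_i}u_i(t)$ with $u_i$ holomorphic, $u_i(0)\ne0$, and $u_i(0)\neq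 1$ whenever $d_i=0$. *)

(* Defs.v *)
From Stdlib Require Import Reals ZArith.
Open Scope R_scope.

Definition C : Type := (R * R)%type.
Definition Cre (z : C) : R := fst z.
Definition Cim (z : C) : R := snd z.
Definition C0 : C := (0, 0).
Definition C1 : C := (1, 0).
Definition Cadd (z w : C) : C := (fst z + fst w, snd z + snd w).
Definition Copp (z : C) : C := (- fst z, - snd z).
Definition Csub (z w : C) : C := Cadd z (Copp w).
Definition Cmul (z w : C) : C :=
  (fst z * fst w - snd z * snd w, fst z * snd w + snd z * fst w).
Definition Cnorm (z : C) : R := sqrt (fst z * fst z + snd z * snd z).
Definition Cinv (z : C) : C :=
  let r := fst z * fst z + snd z * snd z in (fst z / r, - snd z / r).
Fixpoint Cpow (z : C) (k : nat) : C :=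
  match k with O => C1 | S k' => Cmul z (Cpow z k') end.
Definition Cpowz (z : C) (a : Z) : C :=
  match a with
  | Z0 => C1
  | Zpos p => Cpow z (Pos.to_nat p)
  | Zneg p => Cinv (Cpow z (Pos.to_nat p))
  end.
Definition sgnZ (c : Z) : C := Cpowz (Copp C1) c.

Fixpoint Cprod (n : nat) (F : nat -> C) : C :=
  match n with O => C1 | S n' => Cmul (Cprod n' F) (F n') end.

Definition in_disc (t : C) : Prop := Cnorm t < 1.

Definition holomorphic_on_disc (u : C -> C) : Prop :=
  forall t, in_disc t ->
    exists l : C, forall eps, 0 < eps -> exists delta, 0 < delta /\
      forall h : C, 0 < Cnorm h < delta ->
        Cnorm (Csub (Cmul (Csub (u (Cadd t h)) (u t)) (Cinv h)) l) < eps.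

(** A point of C^n is a function [nat -> C]; only coordinates [i < n] matter.
    An integer vector of Z^(2n+1) is a function [nat -> Z]; its coordinates are
    (a_1..a_n, b_1..b_n, c) = (x 0 .. x (n-1), x n .. x (2n-1), x (2n)).
    The matrix M(Λ) has [r] rows; [M k j] is the entry in row k, column j. *)

Fixpoint Zsum (r : nat) (F : nat -> Z) : Z :=
  match r with O => 0%Z | S r' => (Zsum r' F + F r')%Z end.
Fixpoint Rsum (r : nat) (F : nat -> R) : R :=
  match r with O => 0 | S r' => Rsum r' F + F r' end.

Definition in_lattice (n r : nat) (M : nat -> nat -> Z) (x : nat -> Z) : Prop :=
  exists k : nat -> Z, forall j, (j < 2 * n + 1)%nat ->
    x j = Zsum r (fun i => (k i * M i j)%Z).

(** rows of M are Z-linearly independent (so they form a Z-basis of Λ,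
    and rank Λ = r) *)
Definition rows_Z_indep (r m : nat) (M : nat -> nat -> Z) : Prop :=
  forall k : nat -> Z,
    (forall j, (j < m)%nat -> Zsum r (fun i => (k i * M i j)%Z) = 0%Z) ->
    forall i, (i < r)%nat -> k i = 0%Z.

Definition gluing_monomial (n : nat) (x : nat -> Z) (z : nat -> C) : C :=
  Cprod n (fun i => Cmul (Cpowz (z i) (x i)) (Cpowz (Csub C1 (z i)) (x (n + i)%nat))).

Definition in_Cstarbullet_n (n : nat) (z : nat -> C) : Prop :=
  forall i, (i < n)%nat -> z i <> C0 /\ z i <> C1.

Definition in_V (n r : nat) (M : nat -> nat -> Z) (z : nat -> C) : Prop :=
  in_Cstarbullet_n n z /\
  forall x, in_lattice n r M x -> gluing_monomial n x z = sgnZ (x (2 * n)%nat).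

Definition in_Vbar (n r : nat) (M : nat -> nat -> Z) (p : nat -> C) : Prop :=
  (forall i, (i < n)%nat -> p i <> C1) /\
  forall eps, 0 < eps -> exists z, in_V n r M z /\
    forall i, (i < n)%nat -> Cnorm (Csub (z i) (p i)) < eps.

Definition ideal_point (n r : nat) (M : nat -> nat -> Z) (p : nat -> C) : Prop :=
  in_Vbar n r M p /\ ~ in_V n r M p.

(** the block A of M = (A|B|c): A i j = M i j for j < n *)
Definition blockA (M : nat -> nat -> Z) : nat -> nat -> Z := M.

Definition rows_R_indep (m : nat) (A : nat -> nat -> Z) (k : nat) (s : nat -> nat) : Prop :=
  forall c : nat -> R,
    (forall j, (j < m)%nat -> Rsum k (fun i => c i * IZR (A (s i) j)) = 0) ->
    forall i, (i < k)%nat -> c i = 0.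

Definition has_indep_rows (r m : nat) (A : nat -> nat -> Z) (k : nat) : Prop :=
  exists s : nat -> nat, (forall i, (i < k)%nat -> (s i < r)%nat) /\ rows_R_indep m A k s.

(** rank of the (r x m) integer matrix A (over Q, equivalently over R) is q:
    maximal number of linearly independent rows *)
Definition mat_rank (r m : nat) (A : nat -> nat -> Z) (q : nat) : Prop :=
  has_indep_rows r m A q /\ forall k, has_indep_rows r m A k -> (k <= q)%nat.

Definition degeneration_vector (n r : nat) (M : nat -> nat -> Z) (d : nat -> nat) : Prop :=
  (exists i, (i < n)%nat /\ d i <> 0%nat) /\
  forall k, (k < r)%nat -> Zsum n (fun j => (blockA M k j * Z.of_nat (d j))%Z) = 0%Z.

Definition genuine (n r : nat) (M : nat -> nat -> Z) (d : nat -> nat) : Prop :=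
  exists (p : nat -> C) (u : nat -> C -> C),
    ideal_point n r M p /\
    (forall i, (i < n)%nat ->
       holomorphic_on_disc (u i) /\ u i C0 <> C0 /\ (d i = 0%nat -> u i C0 <> C1)) /\
    let f := fun (t : C) (i : nat) => Cmul (Cpow t (d i)) (u i t) in
    (forall i, (i < n)%nat -> f C0 i = p i) /\
    (forall t, in_disc t -> in_Vbar n r M (f t)) /\
    (forall t, in_disc t -> t <> C0 -> in_V n r M (f t)).

(* Main.v *)
From Stdlib Require Import Reals ZArith Lra Lia Field Ring Classical ClassicalEpsilon FunctionalExtensionality IndefiniteDescription.
Require Import Defs.
From HB Require Import structures.
From mathcomp Require all_boot all_algebra.

Definition RI_stmt := forall (m n : nat) (V : nat -> nat -> Z),
 (forall c : nat -> R, (forall j, (j < n)%nat -> Rsum m (fun i => c i * IZR (V i j)) = 0%R) -> forall i, (i < m)%nat -> c i = 0%R) ->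
 exists Psi : nat -> nat -> R, forall k j, (k < m)%nat -> (j < m)%nat ->
   Rsum n (fun i => IZR (V k i) * Psi i j)%R = (if Nat.eqb k j then 1 else 0)%R.
Definition PH_stmt := forall (m r : nat) (s : nat -> nat), (r <= m)%nat ->
  (forall i, (i < m)%nat -> (s i < r)%nat) ->
  (forall i i', (i < m)%nat -> (i' < m)%nat -> s i = s i' -> i = i') ->
  forall k, (k < r)%nat -> exists i, (i < m)%nat /\ s i = k.

Module LA.
Import all_boot all_algebra.
Import GRing.Theory.
Local Open Scope ring_scope.

Definition Req_bool (x y : R) : bool := if Req_EM_T x y then true else false.
Lemma Req_boolP : Equality.axiom Req_bool.
Proof. move=> x y; rewrite /Req_bool; case: Req_EM_T => H; by constructor. Qed.
HB.instance Definition _ := hasDecEq.Build R Req_boolP.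

Definition Rfind (P : pred R) (k : nat) : option R :=
  match excluded_middle_informative (exists x, P x) with
  | left H => Some (proj1_sig (constructive_indefinite_description _ H))
  | right _ => None
  end.
Lemma Rfind_correct P k x : Rfind P k = Some x -> P x.
Proof.
rewrite /Rfind; case: excluded_middle_informative => // H [<-].
exact: (proj2_sig (constructive_indefinite_description _ H)).
Qed.
Lemma Rfind_complete (P : pred R) : (exists x, P x) -> exists k, Rfind P k.
Proof. move=> H; exists 0%N; rewrite /Rfind; case: excluded_middle_informative => //. Qed.
Lemma Rfind_ext (P Q : pred R) : P =1 Q -> Rfind P =1 Rfind Q.
Proof. move=> H k; have -> : P = Q by apply: functional_extensionality. by []. Qed.
HB.instance Definition _ := hasChoice.Build R Rfind_correct Rfind_complete Rfind_ext.

Lemma RaddA : associative Rplus. Proof. move=> x y z; ring. Qed.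
Lemma RaddC : commutative Rplus. Proof. move=> x y; ring. Qed.
Lemma Radd0 : left_id (IZR Z0) Rplus. Proof. move=> x; ring. Qed.
Lemma RaddN : left_inverse (IZR Z0) Ropp Rplus. Proof. move=> x; ring. Qed.
HB.instance Definition _ := GRing.isZmodule.Build R RaddA RaddC Radd0 RaddN.
Lemma RmulA : associative Rmult. Proof. move=> x y z; ring. Qed.
Lemma RmulC : commutative Rmult. Proof. move=> x y; ring. Qed.
Lemma Rmul1 : left_id (IZR (Zpos xH)) Rmult. Proof. move=> x; ring. Qed.
Lemma RmulD : left_distributive Rmult Rplus. Proof. move=> x y z; ring. Qed.
Lemma Roner : ((IZR (Zpos xH)) != (IZR Z0) :> R). Proof. apply/eqP; exact: R1_neq_R0. Qed.
HB.instance Definition _ := GRing.Zmodule_isComNzRing.Build R RmulA RmulC Rmul1 RmulD Roner.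
Lemma RmulV : forall x : R, x != 0 -> (Rinv x * x)%R = (IZR (Zpos xH)).
Proof. move=> x /eqP H; by apply: Rinv_l. Qed.
Lemma Rinv0 : Rinv (IZR Z0) = (IZR Z0). Proof. exact: Rinv_0. Qed.
HB.instance Definition _ := GRing.ComNzRing_isField.Build R RmulV Rinv0.


Lemma sumE (n : nat) (F : nat -> R) : \sum_(i < n) F i = Rsum n F.
Proof. elim: n => [|n IH]; first by rewrite big_ord0. by rewrite big_ord_recr /= IH. Qed.

Lemma right_inverse : RI_stmt.
Proof.
move=> m n V Hind.
pose W : 'M[R]_(m, n) := \matrix_(i, j) IZR (V i j).
have Hfree : row_free W.
  rewrite -kermx_eq0; apply/negPn/negP => /rowV0Pn [v /sub_kermxP vW /rV0Pn [i vi]].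
  pose c (k : nat) : R := if (k < m)%N =P true is ReflectT hk then v 0 (Ordinal hk) else 0.
  have Hc : forall j, (j < n)%coq_nat -> Rsum m (fun i => c i * IZR (V i j))%R = 0.
    move=> j /ltP hj.
    have := congr1 (fun M : 'M[R]_(1,n) => M 0 (Ordinal hj)) vW; rewrite !mxE => E; rewrite -sumE -[RHS]E.
    apply: eq_bigr => k _; rewrite !mxE /c.
    case: eqP => [hk|]; last by rewrite ltn_ord.
    by congr (_ * _); congr (v 0 _); apply: val_inj.
  have := Hind c Hc i (elimT ltP (ltn_ord i)).
  rewrite /c; case: eqP => [hk|]; last by rewrite ltn_ord.
  move=> H; apply: (negP vi); apply/eqP; rewrite -[RHS]H; congr (v 0 _); exact: val_inj.
move/row_freeP: Hfree => [B HB].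
exists (fun i j => if ((i < n) && (j < m))%N =P true is ReflectT h then B (Ordinal (proj1 (andP h))) (Ordinal (proj2 (andP h))) else 0).
move=> k j /ltP hk /ltP hj.
have E := congr1 (fun M : 'M[R]_(m,m) => M (Ordinal hk) (Ordinal hj)) HB; rewrite /= !mxE in E.
rewrite -sumE.
transitivity (\sum_(i<n) W (Ordinal hk) i * B i (Ordinal hj)).
  apply: eq_bigr => i _; rewrite mxE; case: eqP => [h|]; last by move=> /negP; rewrite ltn_ord hj.
  by congr (_ * B _ _); apply: val_inj.
rewrite E; case: (Nat.eqb_spec k j) => [e|ne].
  subst j; have -> : (Ordinal hk == Ordinal hj) = true by apply/eqP; apply: val_inj.
  by [].
have -> : (Ordinal hk == Ordinal hj) = false.
  by apply/negbTE/eqP => -[].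
by [].
Qed.

Lemma pigeon : PH_stmt.
Proof.
move=> m r s /leP hrm hs hinj k /ltP hk.
apply: NNPP => Hno.
pose f (i : 'I_m) : 'I_r := Ordinal (introT ltP (hs i (elimT ltP (ltn_ord i)))).
have finj : injective f.
  move=> i i' /(congr1 val) /= e; apply: val_inj; apply: hinj => //; exact: (elimT ltP (ltn_ord _)).
have sub : [set f i | i : 'I_m] \subset ~: [set Ordinal hk].
  apply/subsetP => x /imsetP [i _ ->]; rewrite !inE; apply/eqP => -[e].
  apply: Hno; exists i; split => //; exact: (elimT ltP (ltn_ord _)).
have := subset_leq_card sub.
rewrite card_imset // cardsC1 ?cardsT !card_ord.
move=> h; move: (leq_trans hrm h); clear -hk; case: r hk => // r0 _ /=; by rewrite ltnn.
Qed.
End LA.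

Open Scope R_scope.

Lemma Ceq (a b c d : R) : a = c -> b = d -> (a, b) = (c, d).
Proof. intros -> ->; reflexivity. Qed.

Lemma Cring_theory : ring_theory C0 C1 Cadd Cmul Csub Copp (@eq C).
Proof.
  constructor; intros; repeat match goal with z : C |- _ => destruct z end;
  unfold Csub, Cadd, Cmul, Copp, C0, C1; simpl; apply Ceq; ring.
Qed.
Add Ring Cring : Cring_theory.

Definition Cdiv (a b : C) : C := Cmul a (Cinv b).

Lemma C1_neq_C0 : C1 <> C0.
Proof. unfold C1, C0; intro H; injection H; intros; lra. Qed.

Lemma Cnorm2_pos (z : C) : z <> C0 -> 0 < fst z * fst z + snd z * snd z.
Proof.
  destruct z as [x y]; simpl; intro H.
  destruct (Req_dec x 0); destruct (Req_dec y 0); subst.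
  - exfalso; apply H; reflexivity.
  - assert (0 < y*y) by (apply Rsqr_pos_lt; auto). nra.
  - assert (0 < x*x) by (apply Rsqr_pos_lt; auto). nra.
  - assert (0 < y*y) by (apply Rsqr_pos_lt; auto). nra.
Qed.

Lemma Cinv_l (z : C) : z <> C0 -> Cmul (Cinv z) z = C1.
Proof.
  intro H; pose proof (Cnorm2_pos z H).
  destruct z as [x y]; unfold Cinv, Cmul, C1; simpl in *; apply Ceq; field; lra.
Qed.

Lemma Cfield_theory : field_theory C0 C1 Cadd Cmul Csub Copp Cdiv Cinv (@eq C).
Proof.
  constructor.
  - exact Cring_theory.
  - exact C1_neq_C0.
  - reflexivity.
  - exact Cinv_l.
Qed.
Add Field Cfield : Cfield_theory.

Lemma test_field (a b : C) : b <> C0 -> Cmul (Cdiv a b) b = a.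
Proof. intros; field; auto. Qed.

Definition RtoC (a : R) : C := (a, 0).

Lemma Cnorm_nonneg z : 0 <= Cnorm z.
Proof. unfold Cnorm; apply sqrt_pos. Qed.

Lemma Cnorm_mul z w : Cnorm (Cmul z w) = Cnorm z * Cnorm w.
Proof.
  destruct z as [x y]; destruct w as [u v]; unfold Cnorm, Cmul; simpl.
  rewrite <- sqrt_mult by nra. f_equal; ring.
Qed.

Lemma Cnorm_triangle z w : Cnorm (Cadd z w) <= Cnorm z + Cnorm w.
Proof.
  destruct z as [x y]; destruct w as [u v]; unfold Cnorm, Cadd; simpl.
  set (P := x*x+y*y); set (Q := u*u+v*v).
  assert (HP : 0 <= P) by (unfold P; nra). assert (HQ : 0 <= Q) by (unfold Q; nra).
  assert (Hab : x*u+y*v <= sqrt P * sqrt Q).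
  { rewrite <- sqrt_mult by auto.
    destruct (Rle_dec (x*u+y*v) 0) as [h|h].
    - pose proof (sqrt_pos (P*Q)); lra.
    - rewrite <- (sqrt_square (x*u+y*v)) at 1 by lra.
      apply sqrt_le_1_alt. unfold P, Q.
      assert (0 <= (x*v-y*u)*(x*v-y*u)) by apply Rle_0_sqr. nra. }
  rewrite <- (sqrt_square (sqrt P + sqrt Q)) by (pose proof (sqrt_pos P); pose proof (sqrt_pos Q); lra).
  apply sqrt_le_1_alt.
  replace ((sqrt P + sqrt Q) * (sqrt P + sqrt Q)) with (sqrt P * sqrt P + sqrt Q * sqrt Q + 2 * (sqrt P * sqrt Q)) by ring.
  rewrite !sqrt_sqrt by auto.
  assert (E: (x+u)*(x+u)+(y+v)*(y+v) = P + Q + 2*(x*u+y*v)) by (unfold P,Q; ring). lra.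
Qed.

Lemma Cnorm_opp z : Cnorm (Copp z) = Cnorm z.
Proof. destruct z; unfold Cnorm, Copp; simpl; f_equal; ring. Qed.

Lemma Cnorm_sub_sym z w : Cnorm (Csub z w) = Cnorm (Csub w z).
Proof. replace (Csub z w) with (Copp (Csub w z)) by ring. apply Cnorm_opp. Qed.

Lemma Cnorm_sub z w : Cnorm (Csub z w) <= Cnorm z + Cnorm w.
Proof. unfold Csub. rewrite <- (Cnorm_opp w). apply Cnorm_triangle. Qed.

Lemma Cnorm_C0 : Cnorm C0 = 0.
Proof. unfold Cnorm, C0; simpl. replace (0*0+0*0) with 0 by ring. apply sqrt_0. Qed.

Lemma Cnorm_RtoC a : Cnorm (RtoC a) = Rabs a.
Proof. unfold Cnorm, RtoC; simpl. replace (a*a+0*0) with (a*a) by ring. apply sqrt_Rsqr_abs. Qed.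

Lemma Cnorm_C1 : Cnorm C1 = 1.
Proof. change C1 with (RtoC 1). rewrite Cnorm_RtoC. apply Rabs_R1. Qed.

Lemma Cnorm_eq0 z : Cnorm z = 0 -> z = C0.
Proof.
  destruct z as [x y]; unfold Cnorm; simpl; intro H.
  apply sqrt_eq_0 in H; [|nra]. unfold C0; apply Ceq; nra.
Qed.

Lemma Cnorm_pos z : z <> C0 -> 0 < Cnorm z.
Proof. intro H; destruct (Cnorm_nonneg z) as [h|h]; auto. symmetry in h. apply Cnorm_eq0 in h. contradiction. Qed.

Lemma Cnorm_fst z : Rabs (fst z) <= Cnorm z.
Proof.
  destruct z as [x y]; unfold Cnorm; simpl. rewrite <- sqrt_Rsqr_abs. apply sqrt_le_1_alt. unfold Rsqr; nra.
Qed.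
Lemma Cnorm_snd z : Rabs (snd z) <= Cnorm z.
Proof.
  destruct z as [x y]; unfold Cnorm; simpl. rewrite <- sqrt_Rsqr_abs. apply sqrt_le_1_alt. unfold Rsqr; nra.
Qed.

Lemma Cpow_add z a b : Cpow z (a + b) = Cmul (Cpow z a) (Cpow z b).
Proof. induction a; simpl. ring. rewrite IHa; ring. Qed.

Lemma Cpow_mul_base z w a : Cpow (Cmul z w) a = Cmul (Cpow z a) (Cpow w a).
Proof. induction a; simpl. ring. rewrite IHa; ring. Qed.

Lemma Cnorm_pow z a : Cnorm (Cpow z a) = Cnorm z ^ a.
Proof. induction a; simpl. apply Cnorm_C1. rewrite Cnorm_mul, IHa; ring. Qed.

Lemma Cmul_neq0 z w : z <> C0 -> w <> C0 -> Cmul z w <> C0.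
Proof.
  intros H1 H2 H. apply (f_equal Cnorm) in H. rewrite Cnorm_mul, Cnorm_C0 in H.
  pose proof (Cnorm_pos _ H1); pose proof (Cnorm_pos _ H2); nra.
Qed.

Lemma Cpow_neq0 z a : z <> C0 -> Cpow z a <> C0.
Proof. intro H; induction a; simpl. apply C1_neq_C0. apply Cmul_neq0; auto. Qed.

Lemma Cinv_neq0 z : z <> C0 -> Cinv z <> C0.
Proof. intros H H'. pose proof (Cinv_l z H). rewrite H' in H0. apply C1_neq_C0. rewrite <- H0. ring. Qed.

Lemma Cnorm_inv z : z <> C0 -> Cnorm (Cinv z) = / Cnorm z.
Proof.
  intro H. pose proof (Cinv_l z H). apply (f_equal Cnorm) in H0. rewrite Cnorm_mul, Cnorm_C1 in H0.
  pose proof (Cnorm_pos _ H). field_simplify_eq; [|lra]. lra.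
Qed.

Lemma Cpow_C0 d : (0 < d)%nat -> Cpow C0 d = C0.
Proof. destruct d; [lia|]. intros _; simpl. ring. Qed.

Lemma Cinv_unique z w : Cmul w z = C1 -> z <> C0 -> Cinv z = w.
Proof. intros H Hz. rewrite <- (Cinv_l z Hz) in H. field_simplify_eq in H; auto.
  transitivity (Cmul (Cmul w z) (Cinv z)). rewrite H. field. auto. field. auto. Qed.

Lemma Cpowz_split z a : Cpowz z a = Cmul (Cpow z (Z.to_nat a)) (Cinv (Cpow z (Z.to_nat (- a)))).
Proof.
  assert (Hi : Cinv C1 = C1) by (apply Cinv_unique; [ring | apply C1_neq_C0]).
  destruct a; simpl.
  - rewrite Hi; ring.
  - rewrite Hi; ring.
  - ring.
Qed.

Lemma Cpowz_neq0 z a : z <> C0 -> Cpowz z a <> C0.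
Proof. intro H. rewrite Cpowz_split. apply Cmul_neq0. apply Cpow_neq0; auto. apply Cinv_neq0, Cpow_neq0; auto. Qed.

Lemma Cpowz_succ z a : z <> C0 -> Cpowz z (a + 1) = Cmul (Cpowz z a) z.
Proof.
  intro H. rewrite !Cpowz_split.
  destruct (Z_le_gt_dec 0 a).
  - replace (Z.to_nat (a+1)) with (S (Z.to_nat a)) by lia.
    replace (Z.to_nat (-(a+1))) with 0%nat by lia. replace (Z.to_nat (-a)) with 0%nat by lia.
    simpl; ring.
  - replace (Z.to_nat (a+1)) with 0%nat by lia. replace (Z.to_nat a) with 0%nat by lia.
    replace (Z.to_nat (-a)) with (S (Z.to_nat (-(a+1)))) by lia.
    simpl. pose proof (Cpow_neq0 z (Z.to_nat (-(a+1))) H). field. split; auto.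
Qed.

Lemma Cpowz_pred z a : z <> C0 -> Cpowz z (a - 1) = Cmul (Cpowz z a) (Cinv z).
Proof.
  intro H. pose proof (Cpowz_succ z (a-1) H). replace (a - 1 + 1)%Z with a in H0 by lia.
  rewrite H0. field. auto.
Qed.

Lemma Cpowz_0 z : Cpowz z 0 = C1.
Proof. reflexivity. Qed.

Lemma Cpowz_add z a b : z <> C0 -> Cpowz z (a + b) = Cmul (Cpowz z a) (Cpowz z b).
Proof.
  intro H. revert a. induction b using Z.peano_ind; intro a.
  - rewrite Z.add_0_r, Cpowz_0. ring.
  - rewrite <- Z.add_1_r, Z.add_assoc, !Cpowz_succ, IHb by auto. ring.
  - rewrite <- Z.sub_1_r, Z.add_sub_assoc, !Cpowz_pred, IHb by auto. ring.
Qed.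

Lemma Cpowz_mul z a k : z <> C0 -> Cpowz z (a * k) = Cpowz (Cpowz z a) k.
Proof.
  intro H. pose proof (Cpowz_neq0 z a H) as Ha.
  induction k using Z.peano_ind.
  - rewrite Z.mul_0_r. reflexivity.
  - rewrite <- Z.add_1_r, Z.mul_add_distr_l, Z.mul_1_r, Cpowz_add, Cpowz_succ, IHk by auto. ring.
  - rewrite <- Z.sub_1_r, Z.mul_sub_distr_l, Z.mul_1_r, Cpowz_pred by auto.
    replace (a * k - a)%Z with (a * k + - a)%Z by ring. rewrite Cpowz_add, IHk by auto.
    replace (Cpowz z (-a)) with (Cinv (Cpowz z a)). ring.
    apply Cinv_unique; auto. rewrite <- Cpowz_add by auto. replace (-a + a)%Z with 0%Z by ring. reflexivity.
Qed.

Lemma Cpowz_mulbase z w k : z <> C0 -> w <> C0 -> Cpowz (Cmul z w) k = Cmul (Cpowz z k) (Cpowz w k).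
Proof.
  intros H1 H2. pose proof (Cmul_neq0 _ _ H1 H2) as H3.
  induction k using Z.peano_ind.
  - simpl; ring.
  - rewrite <- Z.add_1_r, !Cpowz_succ, IHk by auto. ring.
  - rewrite <- Z.sub_1_r, !Cpowz_pred, IHk by auto. field. auto.
Qed.

Definition cis (th : R) : C := (cos th, sin th).

Lemma cis_add a b : Cmul (cis a) (cis b) = cis (a + b).
Proof. unfold cis, Cmul; simpl. rewrite cos_plus, sin_plus. apply Ceq; ring. Qed.

Lemma cis_0 : cis 0 = C1.
Proof. unfold cis, C1. rewrite cos_0, sin_0. reflexivity. Qed.

Lemma Cnorm_cis a : Cnorm (cis a) = 1.
Proof. unfold Cnorm, cis; simpl. rewrite <- sqrt_1. f_equal. pose proof (sin2_cos2 a). unfold Rsqr in H. lra. Qed.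

Lemma cis_neq0 a : cis a <> C0.
Proof. intro H. pose proof (Cnorm_cis a). rewrite H, Cnorm_C0 in H0. lra. Qed.

Lemma Cpow_cis a k : Cpow (cis a) k = cis (INR k * a).
Proof.
  induction k. simpl. rewrite Rmult_0_l, cis_0. reflexivity.
  change (Cpow (cis a) (S k)) with (Cmul (cis a) (Cpow (cis a) k)).
  rewrite IHk, cis_add, S_INR. f_equal. ring.
Qed.

Lemma Cinv_cis a : Cinv (cis a) = cis (- a).
Proof. apply Cinv_unique. rewrite cis_add. replace (-a + a) with 0 by ring. apply cis_0. apply cis_neq0. Qed.

Lemma Cpowz_cis a c : Cpowz (cis a) c = cis (IZR c * a).
Proof.
  rewrite Cpowz_split, !Cpow_cis, Cinv_cis, cis_add. f_equal.
  destruct (Z_le_gt_dec 0 c).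
  - replace (Z.to_nat (-c)) with 0%nat by lia. rewrite (INR_IZR_INZ (Z.to_nat c)), Z2Nat.id by lia. simpl (INR 0). ring.
  - replace (Z.to_nat c) with 0%nat by lia. rewrite (INR_IZR_INZ (Z.to_nat (-c))), Z2Nat.id by lia. rewrite opp_IZR; simpl (INR 0); ring.
Qed.

Lemma sgnZ_cis c : sgnZ c = cis (IZR c * PI).
Proof.
  unfold sgnZ. replace (Copp C1) with (cis PI). apply Cpowz_cis.
  unfold cis, Copp, C1; simpl. rewrite cos_PI, sin_PI. apply Ceq; ring.
Qed.

Fixpoint Csum (n : nat) (F : nat -> C) : C :=
  match n with O => C0 | S n' => Cadd (Csum n' F) (F n') end.
Fixpoint natsum (n : nat) (F : nat -> nat) : nat :=
  match n with O => 0%nat | S n' => (natsum n' F + F n')%nat end.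

Lemma Cprod_ext n f g : (forall i, (i < n)%nat -> f i = g i) -> Cprod n f = Cprod n g.
Proof. induction n; intros H; simpl; auto. rewrite IHn, H; auto. Qed.
Lemma Csum_ext n f g : (forall i, (i < n)%nat -> f i = g i) -> Csum n f = Csum n g.
Proof. induction n; intros H; simpl; auto. rewrite IHn, H; auto. Qed.

Lemma Cprod_mul n f g : Cprod n (fun i => Cmul (f i) (g i)) = Cmul (Cprod n f) (Cprod n g).
Proof. induction n; simpl. ring. rewrite IHn; ring. Qed.

Lemma Cprod_neq0 n f : (forall i, (i < n)%nat -> f i <> C0) -> Cprod n f <> C0.
Proof. induction n; intros H; simpl. apply C1_neq_C0. apply Cmul_neq0; auto. Qed.

Lemma Cprod_inv n f : (forall i, (i < n)%nat -> f i <> C0) -> Cprod n (fun i => Cinv (f i)) = Cinv (Cprod n f).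
Proof.
  intro H; symmetry; apply Cinv_unique.
  - rewrite <- Cprod_mul. clear -H. induction n; simpl. ring. rewrite IHn by auto. rewrite Cinv_l by auto. ring.
  - apply Cprod_neq0; auto.
Qed.

Lemma Cprod_Cpowz n f k : (forall i, (i < n)%nat -> f i <> C0) -> Cprod n (fun i => Cpowz (f i) k) = Cpowz (Cprod n f) k.
Proof.
  induction n; intros H; simpl. induction k using Z.peano_ind; auto.
  - rewrite <- Z.add_1_r, Cpowz_succ, <- IHk. ring. apply C1_neq_C0.
  - rewrite <- Z.sub_1_r, Cpowz_pred, <- IHk. rewrite (Cinv_unique C1 C1). ring. ring. apply C1_neq_C0. apply C1_neq_C0.
  - rewrite IHn by auto. rewrite Cpowz_mulbase; auto. apply Cprod_neq0; auto.
Qed.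

Lemma Cprod_pow n t e : Cprod n (fun i => Cpow t (e i)) = Cpow t (natsum n e).
Proof. induction n; simpl; auto. rewrite IHn, Cpow_add. ring. Qed.

Lemma sgnZ_add a b : sgnZ (a + b) = Cmul (sgnZ a) (sgnZ b).
Proof. unfold sgnZ. apply Cpowz_add. intro H; injection H; lra. Qed.
Lemma sgnZ_mul k c : sgnZ (k * c) = Cpowz (sgnZ c) k.
Proof. unfold sgnZ. rewrite Z.mul_comm. apply Cpowz_mul. intro H; injection H; lra. Qed.

Lemma gm_ext n x x' z : (forall j, (j < 2 * n)%nat -> x j = x' j) -> gluing_monomial n x z = gluing_monomial n x' z.
Proof. intro H; unfold gluing_monomial. apply Cprod_ext; intros i Hi. rewrite !H by lia. reflexivity. Qed.

Definition zok (n : nat) (z : nat -> C) := forall i, (i < n)%nat -> z i <> C0 /\ Csub C1 (z i) <> C0.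

Lemma gm_add n x y z : zok n z ->
  gluing_monomial n (fun j => (x j + y j)%Z) z = Cmul (gluing_monomial n x z) (gluing_monomial n y z).
Proof.
  intro H; unfold gluing_monomial. rewrite <- Cprod_mul. apply Cprod_ext; intros i Hi.
  destruct (H i Hi). rewrite !Cpowz_add by auto. ring.
Qed.

Lemma gm_scale n x k z : zok n z ->
  gluing_monomial n (fun j => (k * x j)%Z) z = Cpowz (gluing_monomial n x z) k.
Proof.
  intro H; unfold gluing_monomial. rewrite <- Cprod_Cpowz.
  - apply Cprod_ext; intros i Hi. destruct (H i Hi).
    rewrite (Z.mul_comm k), (Z.mul_comm k), !Cpowz_mul by auto. rewrite Cpowz_mulbase; auto; apply Cpowz_neq0; auto.
  - intros i Hi; destruct (H i Hi). apply Cmul_neq0; apply Cpowz_neq0; auto.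
Qed.

Lemma gm_zero n z : gluing_monomial n (fun _ => 0%Z) z = C1.
Proof. unfold gluing_monomial. rewrite (Cprod_ext n _ (fun _ => C1)).
  - clear. induction n; simpl; auto. rewrite IHn. ring.
  - intros; simpl. ring. Qed.

Lemma lattice_closure n r M z : zok n z ->
  (forall k, (k < r)%nat -> gluing_monomial n (M k) z = sgnZ (M k (2 * n)%nat)) ->
  forall x, in_lattice n r M x -> gluing_monomial n x z = sgnZ (x (2 * n)%nat).
Proof.
  intros Hz Hrow x [kk Hx].
  assert (G : forall r', (r' <= r)%nat ->
    gluing_monomial n (fun j => Zsum r' (fun i => (kk i * M i j)%Z)) z = sgnZ (Zsum r' (fun i => (kk i * M i (2*n)%nat)%Z))).
  { induction r'; intros Hr; simpl.
    - rewrite gm_zero. reflexivity.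
    - rewrite gm_add, gm_scale, IHr', Hrow, sgnZ_add, sgnZ_mul by (auto; lia). reflexivity. }
  rewrite (gm_ext n x (fun j => Zsum r (fun i => (kk i * M i j)%Z))).
  - rewrite G by lia. rewrite Hx by lia. reflexivity.
  - intros j Hj; apply Hx; lia.
Qed.

Definition bnd (N : nat) (x : nat -> C) (e : R) := forall j, (j < N)%nat -> Cnorm (x j) <= e.
Definition vsub (x y : nat -> C) : nat -> C := fun j => Csub (x j) (y j).

Definition Nice (N : nat) (g : (nat -> C) -> C) (Dg : nat -> (nat -> C) -> C) : Prop :=
  exists K, 0 <= K /\
  (forall x, bnd N x 1 -> Cnorm (g x) <= K) /\
  (forall j x, (j < N)%nat -> bnd N x 1 -> Cnorm (Dg j x) <= K) /\
  (forall j x y e, (j < N)%nat -> 0 <= e -> bnd N x 1 -> bnd N y 1 -> bnd N (vsub y x) e ->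
     Cnorm (Csub (Dg j y) (Dg j x)) <= K * e) /\
  (forall x y e, 0 <= e -> bnd N x 1 -> bnd N y 1 -> bnd N (vsub y x) e ->
     Cnorm (Csub (Csub (g y) (g x)) (Csum N (fun j => Cmul (Csub (y j) (x j)) (Dg j x)))) <= K * (e * e)).

Lemma Csum_bound N f b : (forall j, (j < N)%nat -> Cnorm (f j) <= b) -> Cnorm (Csum N f) <= INR N * b.
Proof.
  induction N; intros H. simpl. rewrite Cnorm_C0; lra.
  change (Csum (S N) f) with (Cadd (Csum N f) (f N)).
  eapply Rle_trans. apply Cnorm_triangle. rewrite S_INR.
  assert (Cnorm (Csum N f) <= INR N * b) by (apply IHN; auto). specialize (H N (Nat.lt_succ_diag_r N)). lra.
Qed.

Lemma Csum_add N f g : Csum N (fun j => Cadd (f j) (g j)) = Cadd (Csum N f) (Csum N g).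
Proof. induction N; simpl. ring. rewrite IHN; ring. Qed.
Lemma Csum_scal N c f : Csum N (fun j => Cmul c (f j)) = Cmul c (Csum N f).
Proof. induction N; simpl. ring. rewrite IHN; ring. Qed.
Lemma Csum_zero N : Csum N (fun _ => C0) = C0.
Proof. induction N; simpl; auto. rewrite IHN; ring. Qed.
Lemma Csum_delta N j0 f : (j0 < N)%nat -> Csum N (fun j => Cmul (f j) (if Nat.eqb j j0 then C1 else C0)) = f j0.
Proof.
  induction N; intros H; [lia|]. simpl.
  destruct (Nat.eqb_spec N j0).
  - subst. rewrite (Csum_ext _ _ (fun _ => C0)). rewrite Csum_zero; ring.
    intros i Hi. destruct (Nat.eqb_spec i j0); [lia|ring].
  - rewrite IHN by lia. ring.
Qed.

Lemma Nice_nonneg_e N x y e : (0 < N)%nat -> bnd N (vsub y x) e -> 0 <= e.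
Proof. intros H1 H2. specialize (H2 0%nat H1). pose proof (Cnorm_nonneg (vsub y x 0%nat)). lra. Qed.

Lemma Nice_lip N g Dg : Nice N g Dg -> exists L, 0 <= L /\
  forall x y e, 0 <= e -> bnd N x 1 -> bnd N y 1 -> bnd N (vsub y x) e -> Cnorm (Csub (g y) (g x)) <= L * e.
Proof.
  intros (K & HK & Hb & HDb & HDl & Hr). exists ((INR N + 2) * K). split.
  { pose proof (pos_INR N). nra. }
  intros x y e He Hx Hy Hyx.
  destruct (Rle_dec e 2).
  - specialize (Hr x y e He Hx Hy Hyx).
    assert (Cnorm (Csum N (fun j => Cmul (Csub (y j) (x j)) (Dg j x))) <= INR N * (e * K)).
    { apply Csum_bound. intros j Hj. rewrite Cnorm_mul. apply Rmult_le_compat; [apply Cnorm_nonneg|apply Cnorm_nonneg|apply (Hyx j Hj)|apply HDb; auto]. }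
    set (S := Csum N _) in *.
    replace (Csub (g y) (g x)) with (Cadd (Csub (Csub (g y) (g x)) S) S) by ring.
    eapply Rle_trans. apply Cnorm_triangle. pose proof (pos_INR N).
    assert (K*(e*e) <= K*(2*e)) by (apply Rmult_le_compat_l; nra). nra.
  - eapply Rle_trans. apply Cnorm_sub. pose proof (Hb x Hx). pose proof (Hb y Hy).
    pose proof (pos_INR N). assert (K*2 <= K*e) by (apply Rmult_le_compat_l; lra).
    assert (0 <= INR N * K * e) by (apply Rmult_le_pos; [apply Rmult_le_pos|]; lra). nra.
Qed.

Lemma Nice_ext N g Dg g' Dg' : Nice N g Dg ->
  (forall x, bnd N x 1 -> g x = g' x) -> (forall j x, (j < N)%nat -> bnd N x 1 -> Dg j x = Dg' j x) ->
  Nice N g' Dg'.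
Proof.
  intros (K & HK & Hb & HDb & HDl & Hr) Eg ED. exists K. repeat split; auto.
  - intros x Hx. rewrite <- Eg; auto.
  - intros j x Hj Hx. rewrite <- ED; auto.
  - intros j x y e Hj He Hx Hy Hyx. rewrite <- !ED; auto.
  - intros x y e He Hx Hy Hyx. rewrite <- !Eg by auto.
    rewrite (Csum_ext _ _ (fun j => Cmul (Csub (y j) (x j)) (Dg j x))). auto.
    intros j Hj; rewrite ED; auto.
Qed.

Lemma Nice_const N c : Nice N (fun _ => c) (fun _ _ => C0).
Proof.
  exists (Cnorm c). repeat split.
  - apply Cnorm_nonneg.
  - intros; lra.
  - intros; rewrite Cnorm_C0; apply Cnorm_nonneg.
  - intros. replace (Csub C0 C0) with C0 by ring. rewrite Cnorm_C0. pose proof (Cnorm_nonneg c). nra.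
  - intros. rewrite (Csum_ext _ _ (fun _ => C0)). rewrite Csum_zero.
    replace (Csub (Csub c c) C0) with C0 by ring. rewrite Cnorm_C0. pose proof (Cnorm_nonneg c). nra.
    intros; ring.
Qed.

Lemma Nice_var N j0 : (j0 < N)%nat -> Nice N (fun x => x j0) (fun j _ => if Nat.eqb j j0 then C1 else C0).
Proof.
  intro Hj0. exists 1. repeat split.
  - lra.
  - intros x Hx; apply Hx; auto.
  - intros j x _ _. destruct (Nat.eqb j j0). rewrite Cnorm_C1; lra. rewrite Cnorm_C0; lra.
  - intros. replace (Csub _ _) with C0 by ring. rewrite Cnorm_C0. lra.
  - intros. rewrite (Csum_delta N j0 (fun j => Csub (y j) (x j))) by auto.
    replace (Csub _ _) with C0 by ring. rewrite Cnorm_C0. nra.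
Qed.

Lemma Nice_add N g Dg h Dh : Nice N g Dg -> Nice N h Dh ->
  Nice N (fun x => Cadd (g x) (h x)) (fun j x => Cadd (Dg j x) (Dh j x)).
Proof.
  intros (K1 & HK1 & Hb1 & HDb1 & HDl1 & Hr1) (K2 & HK2 & Hb2 & HDb2 & HDl2 & Hr2).
  exists (K1 + K2). repeat split.
  - lra.
  - intros x Hx. eapply Rle_trans. apply Cnorm_triangle. specialize (Hb1 x Hx); specialize (Hb2 x Hx); lra.
  - intros j x Hj Hx. eapply Rle_trans. apply Cnorm_triangle. specialize (HDb1 j x Hj Hx); specialize (HDb2 j x Hj Hx); lra.
  - intros j x y e Hj He Hx Hy Hyx.
    replace (Csub _ _) with (Cadd (Csub (Dg j y) (Dg j x)) (Csub (Dh j y) (Dh j x))) by ring.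
    eapply Rle_trans. apply Cnorm_triangle. specialize (HDl1 j x y e Hj He Hx Hy Hyx); specialize (HDl2 j x y e Hj He Hx Hy Hyx); lra.
  - intros x y e He Hx Hy Hyx.
    rewrite (Csum_ext _ _ (fun j => Cadd (Cmul (Csub (y j) (x j)) (Dg j x)) (Cmul (Csub (y j) (x j)) (Dh j x)))) by (intros; ring).
    rewrite Csum_add.
    specialize (Hr1 x y e He Hx Hy Hyx); specialize (Hr2 x y e He Hx Hy Hyx).
    set (S1 := Csum N (fun j => Cmul (Csub (y j) (x j)) (Dg j x))) in *.
    set (S2 := Csum N (fun j => Cmul (Csub (y j) (x j)) (Dh j x))) in *.
    replace (Csub _ _) with (Cadd (Csub (Csub (g y) (g x)) S1) (Csub (Csub (h y) (h x)) S2)) by ring.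
    eapply Rle_trans. apply Cnorm_triangle. rewrite Rmult_plus_distr_r; lra.
Qed.

Lemma Cnorm_mul_le a b A B : Cnorm a <= A -> Cnorm b <= B -> Cnorm (Cmul a b) <= A * B.
Proof. intros. rewrite Cnorm_mul. apply Rmult_le_compat; auto using Cnorm_nonneg. Qed.

Lemma Cnorm_add_le a b A B : Cnorm a <= A -> Cnorm b <= B -> Cnorm (Cadd a b) <= A + B.
Proof. intros. eapply Rle_trans. apply Cnorm_triangle. lra. Qed.

Lemma Nice_mul N g Dg h Dh : Nice N g Dg -> Nice N h Dh ->
  Nice N (fun x => Cmul (g x) (h x)) (fun j x => Cadd (Cmul (g x) (Dh j x)) (Cmul (h x) (Dg j x))).
Proof.
  intros Hg Hh.
  destruct (Nice_lip _ _ _ Hg) as (L1 & HL1 & Lg).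
  destruct (Nice_lip _ _ _ Hh) as (L2 & HL2 & Lh).
  destruct Hg as (K1 & HK1 & Hb1 & HDb1 & HDl1 & Hr1).
  destruct Hh as (K2 & HK2 & Hb2 & HDb2 & HDl2 & Hr2).
  pose proof (pos_INR N) as HN.
  assert (P12 : 0 <= K1 * K2) by nra.
  assert (PL1 : 0 <= L1 * K2) by nra. assert (PL2 : 0 <= L2 * K1) by nra.
  assert (PN : 0 <= INR N * L1 * K2) by (apply Rmult_le_pos; nra).
  exists (2 * (K1 * K2) + L1 * K2 + L2 * K1 + INR N * L1 * K2). repeat split.
  - lra.
  - intros x Hx. eapply Rle_trans. apply Cnorm_mul_le; [apply Hb1|apply Hb2]; auto. lra.
  - intros j x Hj Hx. eapply Rle_trans. apply Cnorm_add_le; apply Cnorm_mul_le; eauto. lra.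
  - intros j x y e Hj He Hx Hy Hyx.
    replace (Csub _ _) with (Cadd (Cadd (Cmul (g y) (Csub (Dh j y) (Dh j x))) (Cmul (Csub (g y) (g x)) (Dh j x)))
                                  (Cadd (Cmul (h y) (Csub (Dg j y) (Dg j x))) (Cmul (Csub (h y) (h x)) (Dg j x)))) by ring.
    eapply Rle_trans.
    apply Cnorm_add_le; apply Cnorm_add_le; apply Cnorm_mul_le; eauto.
    assert (K1 * (K2 * e) + L1 * e * K2 + (K2 * (K1 * e) + L2 * e * K1) = (2 * (K1*K2) + L1*K2 + L2*K1) * e) by ring.
    assert (0 <= INR N * L1 * K2 * e) by (apply Rmult_le_pos; lra). nra.
  - intros x y e He Hx Hy Hyx.
    rewrite (Csum_ext _ _ (fun j => Cadd (Cmul (g x) (Cmul (Csub (y j) (x j)) (Dh j x))) (Cmul (h x) (Cmul (Csub (y j) (x j)) (Dg j x))))) by (intros; ring).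
    rewrite Csum_add, !Csum_scal.
    specialize (Hr1 x y e He Hx Hy Hyx); specialize (Hr2 x y e He Hx Hy Hyx).
    specialize (Lg x y e He Hx Hy Hyx).
    assert (HSh : Cnorm (Csum N (fun j => Cmul (Csub (y j) (x j)) (Dh j x))) <= INR N * (e * K2)).
    { apply Csum_bound. intros j Hj. apply Cnorm_mul_le; auto. apply Hyx; auto. }
    set (Sg := Csum N (fun j => Cmul (Csub (y j) (x j)) (Dg j x))) in *.
    set (Sh := Csum N (fun j => Cmul (Csub (y j) (x j)) (Dh j x))) in *.
    replace (Csub _ _) with (Cadd (Cadd (Cmul (g y) (Csub (Csub (h y) (h x)) Sh)) (Cmul (Csub (g y) (g x)) Sh))
                                  (Cmul (h x) (Csub (Csub (g y) (g x)) Sg))) by ring.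
    eapply Rle_trans.
    apply Cnorm_add_le; [apply Cnorm_add_le|]; apply Cnorm_mul_le; eauto.
    assert (K1 * (K2 * (e * e)) + L1 * e * (INR N * (e * K2)) + K2 * (K1 * (e * e)) = (2 * (K1*K2) + INR N * L1 * K2) * (e*e)) by ring.
    assert (0 <= (L1 * K2 + L2 * K1) * (e * e)) by (apply Rmult_le_pos; nra). nra.
Qed.

Lemma Nice_scal N c g Dg : Nice N g Dg -> Nice N (fun x => Cmul c (g x)) (fun j x => Cmul c (Dg j x)).
Proof.
  intro H. eapply Nice_ext. apply (Nice_mul N _ _ _ _ (Nice_const N c) H).
  - reflexivity.
  - intros; simpl; ring.
Qed.

Lemma Nice_sub N g Dg h Dh : Nice N g Dg -> Nice N h Dh ->
  Nice N (fun x => Csub (g x) (h x)) (fun j x => Csub (Dg j x) (Dh j x)).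
Proof.
  intros H1 H2. eapply Nice_ext. apply (Nice_add N _ _ _ _ H1 (Nice_scal N (Copp C1) _ _ H2)).
  - intros; simpl; ring.
  - intros; simpl; ring.
Qed.

Fixpoint Dpow (g : (nat -> C) -> C) (Dg : nat -> (nat -> C) -> C) (a : nat) : nat -> (nat -> C) -> C :=
  match a with
  | O => fun _ _ => C0
  | S a' => fun j x => Cadd (Cmul (g x) (Dpow g Dg a' j x)) (Cmul (Cpow (g x) a') (Dg j x))
  end.

Lemma Nice_pow N g Dg a : Nice N g Dg -> Nice N (fun x => Cpow (g x) a) (Dpow g Dg a).
Proof.
  intro H. induction a.
  - apply (Nice_const N C1).
  - apply (Nice_mul N _ _ _ _ H IHa).
Qed.

Fixpoint Dprod (f : nat -> (nat -> C) -> C) (Df : nat -> nat -> (nat -> C) -> C) (n : nat) : nat -> (nat -> C) -> C :=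
  match n with
  | O => fun _ _ => C0
  | S n' => fun j x => Cadd (Cmul (Cprod n' (fun i => f i x)) (Df n' j x)) (Cmul (f n' x) (Dprod f Df n' j x))
  end.

Lemma Nice_prod N f Df n : (forall i, (i < n)%nat -> Nice N (f i) (Df i)) ->
  Nice N (fun x => Cprod n (fun i => f i x)) (Dprod f Df n).
Proof.
  induction n; intro H.
  - apply (Nice_const N C1).
  - apply (Nice_mul N _ _ _ _ (IHn (fun i Hi => H i (Nat.lt_lt_succ_r _ _ Hi))) (H n (Nat.lt_succ_diag_r n))).
Qed.

Fixpoint Dsum (Df : nat -> nat -> (nat -> C) -> C) (n : nat) : nat -> (nat -> C) -> C :=
  match n with
  | O => fun _ _ => C0
  | S n' => fun j x => Cadd (Dsum Df n' j x) (Df n' j x)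
  end.

Lemma Nice_sum N f Df n : (forall i, (i < n)%nat -> Nice N (f i) (Df i)) ->
  Nice N (fun x => Csum n (fun i => f i x)) (Dsum Df n).
Proof.
  induction n; intro H.
  - apply (Nice_const N C0).
  - apply (Nice_add N _ _ _ _ (IHn (fun i Hi => H i (Nat.lt_lt_succ_r _ _ Hi))) (H n (Nat.lt_succ_diag_r n))).
Qed.

Lemma Dsum_eq Df n j x : Dsum Df n j x = Csum n (fun i => Df i j x).
Proof. induction n; simpl; auto. rewrite IHn; auto. Qed.

Lemma Dpow_at1 g Dg a j x : g x = C1 -> Dpow g Dg a j x = Cmul (RtoC (INR a)) (Dg j x).
Proof.
  intro H. induction a.
  - unfold RtoC; simpl. apply Ceq; simpl; ring.
  - change (Dpow g Dg (S a) j x) with (Cadd (Cmul (g x) (Dpow g Dg a j x)) (Cmul (Cpow (g x) a) (Dg j x))).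
    rewrite IHa, H. replace (Cpow C1 a) with C1.
    + rewrite S_INR. unfold RtoC, Cmul, Cadd, C1; simpl. apply Ceq; ring.
    + clear. induction a; simpl; auto. rewrite <- IHa. ring.
Qed.

Lemma Cprod_one n f : (forall i, (i < n)%nat -> f i = C1) -> Cprod n f = C1.
Proof. induction n; intro H; simpl; auto. rewrite IHn, H by auto. ring. Qed.

Lemma Dprod_at1 f Df n j x : (forall i, (i < n)%nat -> f i x = C1) -> Dprod f Df n j x = Csum n (fun i => Df i j x).
Proof.
  induction n; intro H; simpl; auto.
  rewrite IHn by auto. rewrite (Cprod_one n (fun i => f i x)) by auto. rewrite H by auto. ring.
Qed.

Lemma Cnorm_le_sum z : Cnorm z <= Rabs (fst z) + Rabs (snd z).
Proof.
  destruct z as [x y]; unfold Cnorm; simpl.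
  rewrite <- (sqrt_square (Rabs x + Rabs y)) by (pose proof (Rabs_pos x); pose proof (Rabs_pos y); lra).
  apply sqrt_le_1_alt.
  assert (x * x = Rabs x * Rabs x) by (rewrite <- Rabs_mult; rewrite Rabs_right; nra).
  assert (y * y = Rabs y * Rabs y) by (rewrite <- Rabs_mult; rewrite Rabs_right; nra).
  pose proof (Rabs_pos x); pose proof (Rabs_pos y). nra.
Qed.

Lemma Cseq_lim (u : nat -> C) (b : nat -> R) :
  (forall p q, (p <= q)%nat -> Cnorm (Csub (u q) (u p)) <= b p) ->
  (forall eps, 0 < eps -> exists N, forall p, (N <= p)%nat -> b p < eps) ->
  exists l, forall p, Cnorm (Csub l (u p)) <= b p.
Proof.
  intros Hc Hb.
  assert (Cc : forall (f : C -> R), (forall z, Rabs (f z) <= Cnorm z) -> (forall z w, f (Csub z w) = f z - f w) -> Cauchy_crit (fun p => f (u p))).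
  { intros f Hf Hl eps Heps. destruct (Hb eps Heps) as [N HN]. exists N. intros p q Hp Hq. unfold Rdist.
    destruct (le_ge_dec p q).
    - rewrite Rabs_minus_sym, <- Hl. eapply Rle_lt_trans. apply Hf. eapply Rle_lt_trans. apply Hc; auto. apply HN; lia.
    - rewrite <- Hl. eapply Rle_lt_trans. apply Hf. eapply Rle_lt_trans. apply Hc; lia. apply HN; lia. }
  destruct (R_complete _ (Cc fst Cnorm_fst (fun z w => eq_refl))) as [lr Hr].
  destruct (R_complete _ (Cc snd Cnorm_snd (fun z w => eq_refl))) as [li Hi].
  exists (lr, li). intro p. apply Rnot_lt_le. intro Hlt.
  assert (Hdl : (Cnorm (Csub (lr, li) (u p)) - b p) / 2 > 0) by lra.
  destruct (Hr _ Hdl) as [N1 HN1]. destruct (Hi _ Hdl) as [N2 HN2].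
  specialize (HN1 (N1 + N2 + p)%nat ltac:(lia)). specialize (HN2 (N1 + N2 + p)%nat ltac:(lia)).
  set (q := (N1 + N2 + p)%nat) in *.
  unfold Rdist in *. pose proof (Hc p q ltac:(unfold q; lia)) as Hpq.
  assert (A : Cnorm (Csub (lr, li) (u q)) < Cnorm (Csub (lr, li) (u p)) - b p).
  { eapply Rle_lt_trans. apply Cnorm_le_sum.
    replace (fst (Csub (lr, li) (u q))) with (lr - fst (u q)) by (simpl; ring).
    replace (snd (Csub (lr, li) (u q))) with (li - snd (u q)) by (simpl; ring). rewrite (Rabs_minus_sym (fst (u q))) in HN1. rewrite (Rabs_minus_sym (snd (u q))) in HN2. lra. }
  assert (B : Cnorm (Csub (lr, li) (u p)) <= Cnorm (Csub (lr, li) (u q)) + Cnorm (Csub (u q) (u p))).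
  { replace (Csub (lr, li) (u p)) with (Cadd (Csub (lr, li) (u q)) (Csub (u q) (u p))) by ring. apply Cnorm_triangle. }
  lra.
Qed.

Fixpoint vnorm (m : nat) (v : nat -> C) : R :=
  match m with O => 0 | S m' => Rmax (vnorm m' v) (Cnorm (v m')) end.

Lemma vnorm_nonneg m v : 0 <= vnorm m v.
Proof. induction m; simpl. lra. eapply Rle_trans. apply IHm. apply Rmax_l. Qed.

Lemma bnd_vnorm m v : bnd m v (vnorm m v).
Proof.
  induction m; intros j Hj. lia. simpl. destruct (Nat.eq_dec j m).
  - subst. apply Rmax_r.
  - eapply Rle_trans. apply IHm. lia. apply Rmax_l.
Qed.

Lemma vnorm_le m v e : 0 <= e -> bnd m v e -> vnorm m v <= e.
Proof.
  induction m; intros He H; simpl. auto.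
  apply Rmax_lub. apply IHm; auto. intros j Hj; apply H; lia. apply H; lia.
Qed.

Lemma bnd_mono m v e e' : bnd m v e -> e <= e' -> bnd m v e'.
Proof. intros H He j Hj. eapply Rle_trans. apply H; auto. auto. Qed.

Lemma pow2_ge n : INR n <= 2 ^ n.
Proof. induction n. simpl; lra. rewrite S_INR. simpl. assert (1 <= 2 ^ n) by (apply pow_R1_Rle; lra). lra. Qed.

Lemma geom_small c : forall eps, 0 < eps -> exists N, forall p, (N <= p)%nat -> c / 2 ^ p < eps.
Proof.
  intros eps He. destruct (archimed (Rabs c / eps)) as [H1 H2].
  exists (Z.to_nat (up (Rabs c / eps))). intros p Hp.
  assert (Hp2 : 0 < 2 ^ p) by (apply pow_lt; lra).
  apply (Rmult_lt_reg_r (2 ^ p)); auto. unfold Rdiv. rewrite Rmult_assoc, Rinv_l by lra. rewrite Rmult_1_r.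
  assert (INR p >= IZR (up (Rabs c / eps))).
  { rewrite INR_IZR_INZ. apply Rle_ge, IZR_le. lia. }
  pose proof (pow2_ge p).
  assert (Rabs c / eps < 2 ^ p) by lra.
  apply (Rmult_lt_compat_r eps) in H3; auto. unfold Rdiv in H3. rewrite Rmult_assoc, Rinv_l, Rmult_1_r in H3 by lra.
  pose proof (Rle_abs c). lra.
Qed.

Lemma Rdiv_le_0_compat a b : 0 <= a -> 0 < b -> 0 <= a / b.
Proof. intros. unfold Rdiv. apply Rmult_le_pos; auto. left; apply Rinv_0_lt_compat; auto. Qed.

Lemma lim_le a c b : (forall p, a <= c + b / 2 ^ p) -> a <= c.
Proof.
  intro H. apply Rnot_lt_le. intro Hlt. destruct (geom_small b (a - c)) as [N HN]. lra.
  specialize (HN N (le_n N)). specialize (H N). lra.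
Qed.

Lemma banach m (Phi : (nat -> C) -> (nat -> C)) sg : 0 <= sg ->
  (forall s, bnd m s sg -> bnd m (Phi s) sg) ->
  (forall s s' e, 0 <= e -> bnd m s sg -> bnd m s' sg -> bnd m (vsub s' s) e -> bnd m (vsub (Phi s') (Phi s)) (e / 2)) ->
  exists s, bnd m s sg /\ forall k, (k < m)%nat -> Phi s k = s k.
Proof.
  intros Hsg Hmap Hcon.
  set (X := fun p => Nat.iter p Phi (fun _ => C0)).
  assert (HX : forall p, bnd m (X p) sg).
  { induction p. intros j Hj; simpl; rewrite Cnorm_C0; auto. apply Hmap; auto. }
  assert (Hp2 : forall p, 0 < 2 ^ p) by (intro; apply pow_lt; lra).
  assert (Hstep : forall p, bnd m (vsub (X (S p)) (X p)) (2 * sg / 2 ^ p)).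
  { induction p.
    - intros j Hj. unfold vsub. simpl. replace (Csub _ C0) with (Phi (fun _ => C0) j) by ring.
      replace (2 * sg / 1) with (2 * sg) by field. pose proof (HX 1%nat j Hj). simpl in H. lra.
    - pose proof (Hp2 p). apply (bnd_mono _ _ ((2 * sg / 2 ^ p) / 2)). apply (Hcon (X p) (X (S p))).
      apply Rdiv_le_0_compat; lra. apply HX. apply HX. apply IHp.
      simpl. right. field. lra. }
  assert (Hcau : forall p i, bnd m (vsub (X (p + i)%nat) (X p)) (4 * sg / 2 ^ p - 4 * sg / 2 ^ (p + i))).
  { intros p i. induction i.
    - rewrite Nat.add_0_r. intros j Hj. unfold vsub. replace (Csub _ _) with C0 by ring. rewrite Cnorm_C0. right; ring.
    - intros j Hj. unfold vsub. replace (p + S i)%nat with (S (p + i)) by lia.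
      replace (Csub (X (S (p + i)) j) (X p j)) with (Cadd (Csub (X (S (p + i)) j) (X (p + i)%nat j)) (Csub (X (p + i)%nat j) (X p j))) by ring.
      eapply Rle_trans. apply Cnorm_triangle.
      pose proof (Hstep (p + i)%nat j Hj). pose proof (IHi j Hj). unfold vsub in *.
      assert (2 * sg / 2 ^ (p + i) = 4 * sg / 2 ^ (p + i) - 4 * sg / 2 ^ S (p + i)).
      { simpl. field. pose proof (Hp2 (p + i)%nat); lra. }
      lra. }
  assert (Hcau2 : forall p q, (p <= q)%nat -> bnd m (vsub (X q) (X p)) (4 * sg / 2 ^ p)).
  { intros p q Hpq. replace q with (p + (q - p))%nat by lia. eapply bnd_mono. apply Hcau.
    assert (0 <= 4 * sg / 2 ^ (p + (q - p))) by (apply Rdiv_le_0_compat; [lra|apply Hp2]). lra. }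
  assert (Hl : forall k, exists l : C, (k < m)%nat -> forall p, Cnorm (Csub l (X p k)) <= 4 * sg / 2 ^ p).
  { intro k. destruct (lt_dec k m) as [Hk|Hk].
    - destruct (Cseq_lim (fun p => X p k) (fun p => 4 * sg / 2 ^ p)) as [l Hl].
      + intros p q Hpq. apply (Hcau2 p q Hpq k Hk).
      + apply geom_small.
      + exists l; auto.
    - exists C0; intro; lia. }
  destruct (functional_choice _ Hl) as [s Hs].
  exists s. split.
  - intros k Hk. apply (lim_le _ _ (4 * sg)). intro p.
    replace (s k) with (Cadd (Csub (s k) (X p k)) (X p k)) by ring.
    eapply Rle_trans. apply Cnorm_triangle. pose proof (Hs k Hk p). pose proof (HX p k Hk). lra.
  - assert (Hsb : bnd m s sg).
    { intros k Hk. apply (lim_le _ _ (4 * sg)). intro p.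
      replace (s k) with (Cadd (Csub (s k) (X p k)) (X p k)) by ring.
      eapply Rle_trans. apply Cnorm_triangle. pose proof (Hs k Hk p). pose proof (HX p k Hk). lra. }
    intros k Hk.
    assert (Z : Cnorm (Csub (Phi s k) (s k)) = 0).
    2:{ apply Cnorm_eq0 in Z. replace (Phi s k) with (Cadd (Csub (Phi s k) (s k)) (s k)) by ring. rewrite Z. ring. }
    apply Rle_antisym; [|apply Cnorm_nonneg].
    apply (lim_le _ _ (4 * sg)). intro p. rewrite Rplus_0_l.
    assert (E : Csub (Phi s k) (s k) = Cadd (Csub (Phi s k) (Phi (X p) k)) (Csub (X (S p) k) (s k))) by (simpl; ring).
    rewrite E. eapply Rle_trans. apply Cnorm_triangle.
    assert (H1 : bnd m (vsub (Phi s) (Phi (X p))) (4 * sg / 2 ^ p / 2)).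
    { apply Hcon; auto. apply Rdiv_le_0_compat; [lra|apply Hp2]. intros j Hj. apply (Hs j Hj p). }
    pose proof (H1 k Hk). unfold vsub in H.
    pose proof (Hs k Hk (S p)). rewrite Cnorm_sub_sym in H0.
    assert (4 * sg / 2 ^ p / 2 + 4 * sg / 2 ^ S p = 4 * sg / 2 ^ p) by (simpl; field; pose proof (Hp2 p); lra).
    lra.
Qed.

Definition NiceK (N : nat) (g : (nat -> C) -> C) (Dg : nat -> (nat -> C) -> C) (K : R) : Prop :=
  0 <= K /\
  (forall x, bnd N x 1 -> Cnorm (g x) <= K) /\
  (forall j x, (j < N)%nat -> bnd N x 1 -> Cnorm (Dg j x) <= K) /\
  (forall j x y e, (j < N)%nat -> 0 <= e -> bnd N x 1 -> bnd N y 1 -> bnd N (vsub y x) e ->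
     Cnorm (Csub (Dg j y) (Dg j x)) <= K * e) /\
  (forall x y e, 0 <= e -> bnd N x 1 -> bnd N y 1 -> bnd N (vsub y x) e ->
     Cnorm (Csub (Csub (g y) (g x)) (Csum N (fun j => Cmul (Csub (y j) (x j)) (Dg j x)))) <= K * (e * e)).

Lemma NiceK_mono N g Dg K K' : NiceK N g Dg K -> K <= K' -> NiceK N g Dg K'.
Proof.
  intros (HK & H1 & H2 & H3 & H4) HKK. repeat split.
  - lra.
  - intros; eapply Rle_trans; [apply H1|]; auto.
  - intros; eapply Rle_trans; [apply H2|]; auto.
  - intros; eapply Rle_trans; [apply H3|]; eauto. apply Rmult_le_compat_r; auto.
  - intros; eapply Rle_trans; [apply H4|]; eauto. apply Rmult_le_compat_r; auto. nra.
Qed.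

Lemma Nice_uniform N m (F : nat -> (nat -> C) -> C) DF :
  (forall k, (k < m)%nat -> Nice N (F k) (DF k)) -> exists K, 1 <= K /\ forall k, (k < m)%nat -> NiceK N (F k) (DF k) K.
Proof.
  induction m; intro H.
  - exists 1. split. lra. intros; lia.
  - destruct IHm as [K [HK1 HK]]. intros; apply H; lia.
    destruct (H m (Nat.lt_succ_diag_r m)) as [K' HK'].
    exists (Rmax K K'). split. eapply Rle_trans. apply HK1. apply Rmax_l.
    intros k Hk. destruct (Nat.eq_dec k m).
    + subst. eapply NiceK_mono. apply HK'. apply Rmax_r.
    + eapply NiceK_mono. apply HK. lia. apply Rmax_l.
Qed.

Definition join (m : nat) (s : nat -> C) (t : C) : nat -> C := fun j => if Nat.ltb j m then s j else t.

Lemma Csum_split_last m f : Csum (S m) f = Cadd (Csum m f) (f m).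
Proof. reflexivity. Qed.

Section IFT.
Variable m : nat.
Variable F : nat -> (nat -> C) -> C.
Variable DF : nat -> nat -> (nat -> C) -> C.
Variable K : R.
Hypothesis HK1 : 1 <= K.
Hypothesis HF : forall k, (k < m)%nat -> NiceK (S m) (F k) (DF k) K.
Hypothesis HF0 : forall k, (k < m)%nat -> F k (fun _ => C0) = C0.
Hypothesis HDF0 : forall k j, (k < m)%nat -> (j < m)%nat -> DF k j (fun _ => C0) = C0.

Variable sg : R.
Hypothesis Hsg0 : 0 < sg.
Hypothesis Hsg1 : sg <= 1/2.
Hypothesis Hsg2 : (INR m + 3) * K * sg <= 1/4.
Definition rho := sg / (8 * K).

Lemma rho_pos : 0 < rho.
Proof. unfold rho. apply Rdiv_lt_0_compat; lra. Qed.
Lemma rho_le : rho <= sg / 8.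
Proof. unfold rho. apply Rmult_le_compat_l. lra. apply Rinv_le_contravar; lra. Qed.

Lemma bnd_join s t e : bnd m s e -> Cnorm t <= e -> bnd (S m) (join m s t) e.
Proof. intros Hs Ht j Hj. unfold join. destruct (Nat.ltb_spec j m). apply Hs; auto. auto. Qed.

Lemma bnd_zero N e : 0 <= e -> bnd N (fun _ => C0) e.
Proof. intros He j Hj. rewrite Cnorm_C0; auto. Qed.

Lemma vsub_join s s' t t' : vsub (join m s' t') (join m s t) = join m (vsub s' s) (Csub t' t).
Proof. apply functional_extensionality; intro j. unfold vsub, join. destruct (Nat.ltb j m); auto. Qed.

Lemma DF_small k j x : (k < m)%nat -> (j < m)%nat -> bnd (S m) x sg -> Cnorm (DF k j x) <= K * sg.
Proof.
  intros Hk Hj Hx. destruct (HF k Hk) as (_ & _ & _ & H3 & _).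
  replace (DF k j x) with (Csub (DF k j x) (DF k j (fun _ => C0))) by (rewrite HDF0 by auto; ring).
  apply H3; try lia; try lra.
  - apply bnd_zero; lra.
  - eapply bnd_mono; eauto; lra.
  - intros i Hi. unfold vsub. replace (Csub (x i) C0) with (x i) by ring. apply Hx; auto.
Qed.

Lemma lin_small k x v e : (k < m)%nat -> bnd (S m) x sg -> bnd m v e -> 0 <= e ->
  Cnorm (Csum m (fun j => Cmul (v j) (DF k j x))) <= INR m * (e * (K * sg)).
Proof.
  intros Hk Hx Hv He. apply Csum_bound. intros j Hj. apply Cnorm_mul_le. apply Hv; auto. apply DF_small; auto.
Qed.

Lemma sum_join s s' t t' (D : nat -> C) :
  Csum (S m) (fun j => Cmul (Csub (join m s' t' j) (join m s t j)) (D j)) =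
  Cadd (Csum m (fun j => Cmul (Csub (s' j) (s j)) (D j))) (Cmul (Csub t' t) (D m)).
Proof.
  rewrite Csum_split_last. f_equal.
  - apply Csum_ext. intros j Hj. unfold join. destruct (Nat.ltb_spec j m); [reflexivity|lia].
  - unfold join. rewrite Nat.ltb_irrefl. reflexivity.
Qed.

Lemma F_contr k s s' t e : (k < m)%nat -> bnd m s sg -> bnd m s' sg -> Cnorm t <= sg -> 0 <= e -> bnd m (vsub s' s) e ->
  Cnorm (Csub (F k (join m s' t)) (F k (join m s t))) <= e / 4.
Proof.
  intros Hk Hs Hs' Ht He Hv.
  set (e' := Rmin e (2 * sg)).
  assert (He' : 0 <= e') by (unfold e'; apply Rmin_glb; lra).
  assert (Hv' : bnd m (vsub s' s) e').
  { intros j Hj. unfold e'. apply Rmin_glb. apply Hv; auto. unfold vsub. eapply Rle_trans. apply Cnorm_sub.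
    pose proof (Hs j Hj); pose proof (Hs' j Hj); lra. }
  destruct (HF k Hk) as (_ & _ & _ & _ & H4).
  assert (Hx : bnd (S m) (join m s t) 1) by (apply bnd_join; [eapply bnd_mono; eauto|]; lra).
  assert (Hy : bnd (S m) (join m s' t) 1) by (apply bnd_join; [eapply bnd_mono; eauto|]; lra).
  assert (Hyx : bnd (S m) (vsub (join m s' t) (join m s t)) e').
  { rewrite vsub_join. apply bnd_join; auto. replace (Csub t t) with C0 by ring. rewrite Cnorm_C0; auto. }
  specialize (H4 _ _ _ He' Hx Hy Hyx).
  rewrite sum_join in H4. replace (Csub t t) with C0 in H4 by ring.
  set (S0 := Csum m (fun j => Cmul (Csub (s' j) (s j)) (DF k j (join m s t)))) in *.
  assert (HS0 : Cnorm S0 <= INR m * (e' * (K * sg))).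
  { apply lin_small; auto. apply bnd_join; auto. }
  replace (Csub (F k (join m s' t)) (F k (join m s t))) with
    (Cadd (Csub (Csub (F k (join m s' t)) (F k (join m s t))) (Cadd S0 (Cmul C0 (DF k m (join m s t))))) S0) by ring.
  eapply Rle_trans. apply Cnorm_triangle.
  assert (e' <= e) by apply Rmin_l. assert (e' <= 2 * sg) by apply Rmin_r.
  assert (K * (e' * e') <= K * (2 * sg) * e) by (rewrite <- Rmult_assoc; apply Rmult_le_compat; nra).
  assert (INR m * (e' * (K * sg)) <= INR m * K * sg * e).
  { pose proof (pos_INR m). replace (INR m * (e'*(K*sg))) with ((INR m*K*sg)*e') by ring.
    apply Rmult_le_compat_l; [|auto]. apply Rmult_le_pos; [apply Rmult_le_pos|]; lra. }
  assert ((INR m + 3) * K * sg * e <= 1/4 * e) by (apply Rmult_le_compat_r; auto).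
  pose proof (pos_INR m). nra.
Qed.

Lemma F_tstep k s t t' : (k < m)%nat -> bnd m s sg -> Cnorm t <= sg -> Cnorm t' <= sg ->
  Cnorm (Csub (F k (join m s t')) (F k (join m s t))) <= 2 * K * Cnorm (Csub t' t).
Proof.
  intros Hk Hs Ht Ht'.
  set (h := Csub t' t). assert (Hh : 0 <= Cnorm h) by apply Cnorm_nonneg.
  assert (Hh1 : Cnorm h <= 1) by (unfold h; eapply Rle_trans; [apply Cnorm_sub|]; lra).
  destruct (HF k Hk) as (_ & _ & H2 & _ & H4).
  assert (Hx : bnd (S m) (join m s t) 1) by (apply bnd_join; [eapply bnd_mono; eauto|]; lra).
  assert (Hy : bnd (S m) (join m s t') 1) by (apply bnd_join; [eapply bnd_mono; eauto|]; lra).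
  assert (Hyx : bnd (S m) (vsub (join m s t') (join m s t)) (Cnorm h)).
  { rewrite vsub_join. apply bnd_join; [|unfold h; lra]. intros j Hj. unfold vsub. replace (Csub (s j) (s j)) with C0 by ring.
    rewrite Cnorm_C0; auto. }
  specialize (H4 _ _ _ Hh Hx Hy Hyx).
  rewrite sum_join in H4.
  rewrite (Csum_ext m _ (fun _ => C0)) in H4 by (intros; ring). rewrite Csum_zero in H4.
  specialize (H2 m (join m s t) (Nat.lt_succ_diag_r m) Hx).
  replace (Csub (F k (join m s t')) (F k (join m s t))) with
    (Cadd (Csub (Csub (F k (join m s t')) (F k (join m s t))) (Cadd C0 (Cmul (Csub t' t) (DF k m (join m s t))))) (Cmul h (DF k m (join m s t)))) by (unfold h; ring).
  eapply Rle_trans. apply Cnorm_triangle. rewrite Cnorm_mul.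
  assert (K * (Cnorm h * Cnorm h) <= K * Cnorm h) by (apply Rmult_le_compat_l; nra).
  assert (Cnorm h * Cnorm (DF k m (join m s t)) <= Cnorm h * K) by (apply Rmult_le_compat_l; auto).
  fold h in H4. fold h. lra.
Qed.

Lemma mKsg : INR m * K * sg <= 1/4.
Proof. pose proof (pos_INR m). assert (0 <= 3 * K * sg) by nra. nra. Qed.

Lemma join00 : join m (fun _ => C0) C0 = fun _ => C0.
Proof. apply functional_extensionality; intro j; unfold join; destruct (Nat.ltb j m); auto. Qed.

Lemma fixed_exists t : Cnorm t <= rho -> exists s, bnd m s sg /\ forall k, (k < m)%nat -> F k (join m s t) = s k.
Proof.
  intro Ht. pose proof rho_le. pose proof rho_pos.
  set (Phi := fun s k => if Nat.ltb k m then F k (join m s t) else C0).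
  destruct (banach m Phi sg) as [s [Hs Hfix]].
  - lra.
  - intros s Hs k Hk. unfold Phi. destruct (Nat.ltb_spec k m); [|lia].
    replace (F k (join m s t)) with (Cadd (Csub (F k (join m s t)) (F k (join m (fun _ => C0) t)))
        (Cadd (Csub (F k (join m (fun _ => C0) t)) (F k (join m (fun _ => C0) C0))) (F k (join m (fun _ => C0) C0)))) by ring.
    rewrite join00, HF0 by auto.
    eapply Rle_trans. apply Cnorm_triangle. eapply Rle_trans. apply Rplus_le_compat_l. apply Cnorm_triangle.
    rewrite Cnorm_C0.
    assert (A : Cnorm (Csub (F k (join m s t)) (F k (join m (fun _ => C0) t))) <= sg / 4).
    { apply F_contr; auto. apply bnd_zero; lra. lra. lra. intros j Hj. unfold vsub. replace (Csub (s j) C0) with (s j) by ring. auto. }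
    assert (B : Cnorm (Csub (F k (join m (fun _ => C0) t)) (F k (join m (fun _ => C0) C0))) <= 2 * K * Cnorm (Csub t C0)).
    { apply F_tstep; auto. apply bnd_zero; lra. rewrite Cnorm_C0; lra. lra. }
    rewrite join00, HF0 in B by auto.
    replace (Csub t C0) with t in B by ring.
    assert (2 * K * Cnorm t <= 2 * K * rho) by (apply Rmult_le_compat_l; lra).
    assert (2 * K * rho = sg / 4) by (unfold rho; field; lra).
    lra.
  - intros s s' e He Hs Hs' Hv k Hk. unfold Phi, vsub. destruct (Nat.ltb_spec k m); [|lia].
    eapply Rle_trans. apply (F_contr k s s' t e); auto; lra. lra.
  - exists s. split; auto. intros k Hk. rewrite <- Hfix by auto. unfold Phi. destruct (Nat.ltb_spec k m); [auto|lia].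
Qed.

Lemma Csum_sub n f g : Csum n (fun j => Csub (f j) (g j)) = Csub (Csum n f) (Csum n g).
Proof. induction n; simpl. ring. rewrite IHn; ring. Qed.

Lemma S_diff (Sf : C -> nat -> C) :
  (forall t, Cnorm t <= rho -> bnd m (Sf t) sg /\ forall k, (k < m)%nat -> F k (join m (Sf t) t) = Sf t k) ->
  forall t0, Cnorm t0 < rho -> exists l : nat -> C, exists Cc, 0 <= Cc /\
    forall h, Cnorm h <= rho - Cnorm t0 -> forall k, (k < m)%nat ->
      Cnorm (Csub (Csub (Sf (Cadd t0 h) k) (Sf t0 k)) (Cmul h (l k))) <= Cc * (Cnorm h * Cnorm h).
Proof.
  intros HS t0 Ht0. pose proof rho_le as Hrl. pose proof rho_pos as Hrp. pose proof mKsg as HmK.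
  pose proof (pos_INR m) as Hm.
  destruct (HS t0 ltac:(lra)) as [Hs0 Hf0].
  set (s0 := Sf t0) in *. set (x := join m s0 t0).
  assert (Hx : bnd (S m) x sg) by (apply bnd_join; auto; lra).
  assert (Hx1 : bnd (S m) x 1) by (eapply bnd_mono; eauto; lra).
  set (Phi := fun (l : nat -> C) k => if Nat.ltb k m then Cadd (DF k m x) (Csum m (fun j => Cmul (l j) (DF k j x))) else C0).
  destruct (banach m Phi (2 * K)) as [l [Hl Hlfix]].
  - lra.
  - intros l Hl k Hk. unfold Phi. destruct (Nat.ltb_spec k m); [|lia].
    eapply Rle_trans. apply Cnorm_triangle.
    destruct (HF k Hk) as (_ & _ & H2 & _ & _).
    pose proof (H2 m x (Nat.lt_succ_diag_r m) Hx1).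
    pose proof (lin_small k x l (2 * K) Hk Hx Hl ltac:(lra)).
    assert (INR m * (2 * K * (K * sg)) = 2 * K * (INR m * K * sg)) by ring.
    assert (2 * K * (INR m * K * sg) <= 2 * K * (1/4)) by (apply Rmult_le_compat_l; lra).
    lra.
  - intros l l' e He Hl Hl' Hv k Hk. unfold Phi, vsub. destruct (Nat.ltb_spec k m); [|lia].
    replace (Csub _ _) with (Csum m (fun j => Cmul (Csub (l' j) (l j)) (DF k j x))).
    2:{ transitivity (Csub (Csum m (fun j => Cmul (l' j) (DF k j x))) (Csum m (fun j => Cmul (l j) (DF k j x)))).
        rewrite <- Csum_sub; apply Csum_ext; intros; ring. ring. }
    eapply Rle_trans. apply (lin_small k x (vsub l' l) e); auto.
    assert (INR m * (e * (K * sg)) = e * (INR m * K * sg)) by ring.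
    assert (e * (INR m * K * sg) <= e * (1/4)) by (apply Rmult_le_compat_l; lra). lra.
  - assert (Hlf : forall k, (k < m)%nat -> l k = Cadd (DF k m x) (Csum m (fun j => Cmul (l j) (DF k j x)))).
    { intros k Hk. rewrite <- Hlfix by auto. unfold Phi. destruct (Nat.ltb_spec k m); [auto|lia]. }
    exists l, (2 * K * ((3 * K + 1) * (3 * K + 1))). split. nra.
    intros h Hh k Hk.
    set (t1 := Cadd t0 h).
    assert (Ht1 : Cnorm t1 <= rho) by (unfold t1; eapply Rle_trans; [apply Cnorm_triangle|]; lra).
    destruct (HS t1 Ht1) as [Hs1 Hf1].
    set (s1 := Sf t1) in *.
    set (y := join m s1 t1).
    assert (Hy : bnd (S m) y sg) by (apply bnd_join; auto; lra).
    assert (Hy1 : bnd (S m) y 1) by (eapply bnd_mono; eauto; lra).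
    assert (Hh0 : 0 <= Cnorm h) by apply Cnorm_nonneg.
    assert (Hh1 : Cnorm h <= 1) by (pose proof (Cnorm_nonneg t0); lra).
    assert (Ht1t0 : Csub t1 t0 = h) by (unfold t1; ring).
    set (D := vnorm m (vsub s1 s0)).
    assert (HD0 : 0 <= D) by apply vnorm_nonneg.
    assert (HD : D <= 3 * K * Cnorm h).
    { assert (D <= D / 4 + 2 * K * Cnorm h).
      { apply vnorm_le. nra. intros j Hj. unfold vsub. rewrite <- (Hf1 j Hj), <- (Hf0 j Hj).
        replace (Csub (F j (join m s1 t1)) (F j (join m s0 t0))) with
          (Cadd (Csub (F j (join m s1 t1)) (F j (join m s0 t1))) (Csub (F j (join m s0 t1)) (F j (join m s0 t0)))) by ring.
        eapply Rle_trans. apply Cnorm_triangle. apply Rplus_le_compat.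
        - apply F_contr; auto. lra. apply bnd_vnorm.
        - rewrite <- Ht1t0. apply F_tstep; auto; lra. }
      nra. }
    set (e := (3 * K + 1) * Cnorm h).
    assert (He : 0 <= e) by (unfold e; nra).
    assert (Hyx : bnd (S m) (vsub y x) e).
    { unfold y, x. rewrite vsub_join. apply bnd_join.
      - intros j Hj. eapply Rle_trans. apply (bnd_vnorm m (vsub s1 s0) j Hj). fold D. unfold e. nra.
      - rewrite Ht1t0. unfold e. nra. }
    set (E := vnorm m (fun k => Csub (Csub (s1 k) (s0 k)) (Cmul h (l k)))).
    assert (HE0 : 0 <= E) by apply vnorm_nonneg.
    assert (HE : E <= K * (e * e) + E / 4).
    { apply vnorm_le. nra. intros k' Hk'.
      destruct (HF k' Hk') as (_ & _ & _ & _ & H4).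
      specialize (H4 x y e He Hx1 Hy1 Hyx).
      unfold y, x in H4. rewrite sum_join in H4. fold x in H4. fold y in H4. rewrite Ht1t0 in H4.
      assert (Hf1' : F k' y = s1 k') by exact (Hf1 k' Hk').
      assert (Hf0' : F k' x = s0 k') by exact (Hf0 k' Hk').
      rewrite Hf1', Hf0' in H4.
      set (A := Csum m (fun j => Cmul (Csub (s1 j) (s0 j)) (DF k' j x))) in *.
      set (L := Csum m (fun j => Cmul (l j) (DF k' j x))).
      assert (HB : Csum m (fun j => Cmul (Csub (Csub (s1 j) (s0 j)) (Cmul h (l j))) (DF k' j x)) = Csub A (Cmul h L)).
      { unfold A, L. rewrite <- Csum_scal, <- Csum_sub. apply Csum_ext; intros; ring. }
      assert (HBn : Cnorm (Csub A (Cmul h L)) <= INR m * (E * (K * sg))).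
      { rewrite <- HB. apply lin_small; auto. apply bnd_vnorm. }
      rewrite (Hlf k' Hk'). fold L.
      replace (Csub (Csub (s1 k') (s0 k')) (Cmul h (Cadd (DF k' m x) L))) with
        (Cadd (Csub (Csub (s1 k') (s0 k')) (Cadd A (Cmul h (DF k' m x)))) (Csub A (Cmul h L))) by ring.
      eapply Rle_trans. apply Cnorm_triangle.
      assert (INR m * (E * (K * sg)) = E * (INR m * K * sg)) by ring.
      assert (E * (INR m * K * sg) <= E * (1/4)) by (apply Rmult_le_compat_l; lra). lra. }
    assert (E <= 2 * K * (e * e)) by (assert (0 <= K * (e * e)) by nra; lra).
    eapply Rle_trans. apply (bnd_vnorm m (fun k => Csub (Csub (s1 k) (s0 k)) (Cmul h (l k))) k Hk). fold E.
    eapply Rle_trans. apply H. unfold e. right; ring.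
Qed.
End IFT.

Definition zeroV : nat -> C := fun _ => C0.

Section NVs.
Variable r : nat.

Definition NV (g : (nat -> C) -> C) (g0 : C) (dv : nat -> C) : Prop :=
  exists Dg, Nice (S r) g Dg /\ g zeroV = g0 /\ forall j, (j < r)%nat -> Dg j zeroV = dv j.

Lemma NV_conv g g0 dv g0' dv' : NV g g0 dv -> g0 = g0' -> (forall j, (j < r)%nat -> dv j = dv' j) -> NV g g0' dv'.
Proof. intros (Dg & H1 & H2 & H3) E1 E2. exists Dg. repeat split; auto. congruence. intros; rewrite H3, E2; auto. Qed.

Lemma NV_ext g g' g0 dv : NV g g0 dv -> (forall x, g x = g' x) -> NV g' g0 dv.
Proof. intros H E. replace g' with g; auto. apply functional_extensionality; auto. Qed.

Lemma NV_const c : NV (fun _ => c) c (fun _ => C0).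
Proof. exists (fun _ _ => C0). repeat split; auto. apply Nice_const. Qed.

Lemma NV_var j0 : (j0 < S r)%nat -> NV (fun x => x j0) C0 (fun j => if Nat.eqb j j0 then C1 else C0).
Proof. intro H. exists (fun j _ => if Nat.eqb j j0 then C1 else C0). repeat split; auto. apply Nice_var; auto. Qed.

Lemma NV_add g g0 a h h0 b : NV g g0 a -> NV h h0 b ->
  NV (fun x => Cadd (g x) (h x)) (Cadd g0 h0) (fun j => Cadd (a j) (b j)).
Proof.
  intros (Dg & H1 & H2 & H3) (Dh & K1 & K2 & K3). eexists. split. apply Nice_add; eauto.
  split. simpl; congruence. intros; simpl. rewrite H3, K3; auto.
Qed.

Lemma NV_sub g g0 a h h0 b : NV g g0 a -> NV h h0 b ->
  NV (fun x => Csub (g x) (h x)) (Csub g0 h0) (fun j => Csub (a j) (b j)).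
Proof.
  intros (Dg & H1 & H2 & H3) (Dh & K1 & K2 & K3). eexists. split. apply Nice_sub; eauto.
  split. simpl; congruence. intros; simpl. rewrite H3, K3; auto.
Qed.

Lemma NV_mul g g0 a h h0 b : NV g g0 a -> NV h h0 b ->
  NV (fun x => Cmul (g x) (h x)) (Cmul g0 h0) (fun j => Cadd (Cmul g0 (b j)) (Cmul h0 (a j))).
Proof.
  intros (Dg & H1 & H2 & H3) (Dh & K1 & K2 & K3). eexists. split. apply Nice_mul; eauto.
  split. simpl; congruence. intros; simpl. rewrite H3, K3, H2, K2; auto.
Qed.

Lemma NV_pow1 g a p : NV g C1 a -> NV (fun x => Cpow (g x) p) C1 (fun j => Cmul (RtoC (INR p)) (a j)).
Proof.
  intro H. induction p.
  - eapply NV_conv. apply (NV_const C1). reflexivity. intros; unfold RtoC, Cmul, C0; simpl. apply Ceq; ring.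
  - eapply NV_conv. apply (NV_mul _ _ _ _ _ _ H IHp). ring.
    intros. rewrite S_INR. unfold RtoC, Cmul, Cadd, C1; simpl. apply Ceq; ring.
Qed.

Lemma NV_pow0 g g0 p : NV g g0 (fun _ => C0) -> NV (fun x => Cpow (g x) p) (Cpow g0 p) (fun _ => C0).
Proof.
  intro H. induction p.
  - apply (NV_const C1).
  - eapply NV_conv. apply (NV_mul _ _ _ _ _ _ H IHp). reflexivity. intros; simpl; ring.
Qed.

Lemma NV_prod n f a : (forall i, (i < n)%nat -> NV (f i) C1 (a i)) ->
  NV (fun x => Cprod n (fun i => f i x)) C1 (fun j => Csum n (fun i => a i j)).
Proof.
  induction n; intro H.
  - eapply NV_conv. apply (NV_const C1). reflexivity. reflexivity.
  - eapply NV_conv. apply (NV_mul _ _ _ _ _ _ (IHn (fun i Hi => H i (Nat.lt_lt_succ_r _ _ Hi))) (H n (Nat.lt_succ_diag_r n))).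
    ring. intros; simpl; ring.
Qed.

Lemma NV_sum n f g0 a : (forall i, (i < n)%nat -> NV (f i) (g0 i) (a i)) ->
  NV (fun x => Csum n (fun i => f i x)) (Csum n g0) (fun j => Csum n (fun i => a i j)).
Proof.
  induction n; intro H.
  - eapply NV_conv. apply (NV_const C0). reflexivity. reflexivity.
  - eapply NV_conv. apply (NV_add _ _ _ _ _ _ (IHn (fun i Hi => H i (Nat.lt_lt_succ_r _ _ Hi))) (H n (Nat.lt_succ_diag_r n))).
    reflexivity. reflexivity.
Qed.

Lemma NV_nice g g0 dv : NV g g0 dv -> exists Dg, Nice (S r) g Dg /\ g zeroV = g0 /\ forall j, (j < r)%nat -> Dg j zeroV = dv j.
Proof. auto. Qed.
End NVs.

Lemma Rsum_ext n f g : (forall i, (i < n)%nat -> f i = g i) -> Rsum n f = Rsum n g.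
Proof. induction n; intro H; simpl; auto. rewrite IHn, H; auto. Qed.

Lemma Rsum_zero n : Rsum n (fun _ => 0) = 0.
Proof. induction n; simpl; auto. rewrite IHn; ring. Qed.

Lemma Rsum_delta n k f : (k < n)%nat -> Rsum n (fun i => f i * (if Nat.eqb i k then 1 else 0)) = f k.
Proof.
  induction n; intro H; [lia|]. simpl. destruct (Nat.eqb_spec n k).
  - subst. rewrite (Rsum_ext _ _ (fun _ => 0)). rewrite Rsum_zero; ring.
    intros i Hi. destruct (Nat.eqb_spec i k); [lia|ring].
  - rewrite IHn by lia. ring.
Qed.

Lemma Rsum_add n f g : Rsum n (fun i => f i + g i) = Rsum n f + Rsum n g.
Proof. induction n; simpl. ring. rewrite IHn; ring. Qed.

Lemma Rsum_scal n c f : Rsum n (fun i => c * f i) = c * Rsum n f.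
Proof. induction n; simpl. ring. rewrite IHn; ring. Qed.

Lemma Rsum_exchange n m f : Rsum n (fun i => Rsum m (fun j => f i j)) = Rsum m (fun j => Rsum n (fun i => f i j)).
Proof.
  induction n; simpl. rewrite Rsum_zero; auto.
  rewrite IHn, <- Rsum_add. reflexivity.
Qed.

Lemma Csum_RtoC n f : Csum n (fun i => RtoC (f i)) = RtoC (Rsum n f).
Proof. induction n; simpl. reflexivity. rewrite IHn. unfold RtoC, Cadd; simpl. apply Ceq; ring. Qed.

Lemma select_rows n r (M : nat -> nat -> Z) :
  (r <= n - 1)%nat -> mat_rank r n (blockA M) (n - 1) ->
  exists Psi : nat -> nat -> R, forall k k', (k < r)%nat -> (k' < r)%nat ->
    Rsum n (fun i => IZR (M k i) * Psi i k') = (if Nat.eqb k k' then 1 else 0).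
Proof.
  intros Hr [[s [Hs Hind]] _]. unfold blockA in *.
  assert (Hinj : forall i i', (i < n - 1)%nat -> (i' < n - 1)%nat -> s i = s i' -> i = i').
  { intros i i' Hi Hi' E. destruct (Nat.eq_dec i i') as [|Ne]; auto. exfalso.
    set (c := fun l => (if Nat.eqb l i then 1 else 0) - (if Nat.eqb l i' then 1 else 0)).
    assert (Hc : c i = 0).
    { apply (Hind c); auto. intros j Hj. unfold c.
      rewrite (Rsum_ext _ _ (fun l => IZR (M (s l) j) * (if Nat.eqb l i then 1 else 0) - IZR (M (s l) j) * (if Nat.eqb l i' then 1 else 0))) by (intros; ring).
      transitivity (Rsum (n-1) (fun l => IZR (M (s l) j) * (if Nat.eqb l i then 1 else 0)) + - Rsum (n-1) (fun l => IZR (M (s l) j) * (if Nat.eqb l i' then 1 else 0))).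
      - rewrite <- (Rmult_1_l (Rsum _ (fun l => IZR _ * (if Nat.eqb l i' then _ else _)))).
        rewrite Ropp_mult_distr_l, <- Rsum_scal, <- Rsum_add. apply Rsum_ext; intros; ring.
      - rewrite !Rsum_delta by auto. rewrite E. ring. }
    unfold c in Hc. rewrite Nat.eqb_refl in Hc. destruct (Nat.eqb_spec i i'); [lia|]. lra. }
  assert (Hsurj : forall k, exists i, (k < r)%nat -> (i < n - 1)%nat /\ s i = k).
  { intro k. destruct (lt_dec k r) as [Hk|Hk].
    - destruct (LA.pigeon (n - 1)%nat r s Hr Hs Hinj k Hk) as [i Hi]. exists i; auto.
    - exists 0%nat; intro; lia. }
  destruct (functional_choice _ Hsurj) as [kap Hkap].
  destruct (LA.right_inverse (n - 1)%nat n (fun i j => M (s i) j) Hind) as [Psi0 HPsi0].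
  exists (fun i k => Psi0 i (kap k)). intros k k' Hk Hk'.
  destruct (Hkap k Hk) as [H1 H2]. destruct (Hkap k' Hk') as [H3 H4].
  pose proof (HPsi0 (kap k) (kap k') H1 H3) as HP. cbv beta in HP. rewrite H2 in HP. rewrite HP.
  destruct (Nat.eqb_spec (kap k) (kap k')) as [E|E]; destruct (Nat.eqb_spec k k') as [E'|E']; auto.
  - exfalso. apply E'. rewrite <- H2, <- H4, E. reflexivity.
  - subst; contradiction.
Qed.

Lemma INR_topos (a : Z) : INR (Z.to_nat a) - INR (Z.to_nat (- a)) = IZR a.
Proof.
  rewrite !INR_IZR_INZ. destruct (Z_le_gt_dec 0 a).
  - replace (Z.to_nat (-a)) with 0%nat by lia. rewrite Z2Nat.id by lia. simpl. ring.
  - replace (Z.to_nat a) with 0%nat by lia. rewrite Z2Nat.id by lia. rewrite opp_IZR. simpl. ring.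
Qed.

Lemma RtoC_mul a b : Cmul (RtoC a) (RtoC b) = RtoC (a * b).
Proof. unfold RtoC, Cmul; simpl. apply Ceq; ring. Qed.
Lemma RtoC_sub a b : Csub (RtoC a) (RtoC b) = RtoC (a - b).
Proof. unfold RtoC, Csub, Cadd, Copp; simpl. apply Ceq; ring. Qed.

Lemma Rsum_sub n' f g : Rsum n' (fun i => f i - g i) = Rsum n' f - Rsum n' g.
Proof. induction n'; simpl. ring. rewrite IHn'; ring. Qed.

Lemma Cprod_cis n' f : Cprod n' (fun i => cis (f i)) = cis (Rsum n' f).
Proof. induction n'; simpl. rewrite cis_0; auto. rewrite IHn', cis_add. reflexivity. Qed.

Lemma natsum_diff n' (a : nat -> Z) (d' : nat -> nat) :
  (Z.of_nat (natsum n' (fun i => (d' i * Z.to_nat (a i))%nat)) - Z.of_nat (natsum n' (fun i => (d' i * Z.to_nat (- a i))%nat)))%Z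
  = Zsum n' (fun j => (a j * Z.of_nat (d' j))%Z).
Proof. induction n'; simpl. reflexivity. rewrite <- IHn'. rewrite !Nat2Z.inj_add, !Nat2Z.inj_mul. lia. Qed.

Section Main.
Variables (n r : nat) (M : nat -> nat -> Z) (d : nat -> nat) (Psi : nat -> nat -> R).
Hypothesis Hd : forall i, (i < n)%nat -> (0 < d i)%nat.
Hypothesis Hdeg : forall k, (k < r)%nat -> Zsum n (fun j => (M k j * Z.of_nat (d j))%Z) = 0%Z.
Hypothesis HPsi : forall k k', (k < r)%nat -> (k' < r)%nat ->
    Rsum n (fun i => IZR (M k i) * Psi i k') = (if Nat.eqb k k' then 1 else 0).

Definition ap k i := Z.to_nat (M k i).
Definition am k i := Z.to_nat (- M k i).
Definition bp k i := Z.to_nat (M k (n + i)%nat).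
Definition bm k i := Z.to_nat (- M k (n + i)%nat).
Definition yv i := Rsum r (fun k => Psi i k * IZR (M k (2 * n)%nat)).
Definition u0 i := cis (yv i * PI).
Definition wv i (x : nat -> C) := Csum r (fun j => Cmul (RtoC (Psi i j)) (x j)).
Definition zv i (x : nat -> C) := Cmul (Cpow (x r) (d i)) (Cmul (u0 i) (Cadd C1 (wv i x))).
Definition Posk k (x : nat -> C) := Cprod n (fun i => Cmul (Cpow (Cadd C1 (wv i x)) (ap k i)) (Cpow (Csub C1 (zv i x)) (bp k i))).
Definition Negk k (x : nat -> C) := Cprod n (fun i => Cmul (Cpow (Cadd C1 (wv i x)) (am k i)) (Cpow (Csub C1 (zv i x)) (bm k i))).
Definition Fk k (x : nat -> C) := Csub (x k) (Csub (Posk k x) (Negk k x)).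

Lemma NV_wv i : NV r (wv i) C0 (fun j => RtoC (Psi i j)).
Proof.
  eapply NV_conv.
  apply (NV_sum r r (fun j x => Cmul (RtoC (Psi i j)) (x j)) (fun _ => C0)
     (fun j' j0 => Cadd (Cmul (RtoC (Psi i j')) (if Nat.eqb j0 j' then C1 else C0)) (Cmul C0 C0))).
  - intros j Hj. eapply NV_conv. apply (NV_mul r _ _ _ _ _ _ (NV_const r (RtoC (Psi i j))) (NV_var r j ltac:(lia))).
    ring. reflexivity.
  - apply Csum_zero.
  - intros j Hj. simpl.
    rewrite (Csum_ext _ _ (fun j' => Cmul (RtoC (Psi i j')) (if Nat.eqb j' j then C1 else C0))).
    + apply Csum_delta; auto.
    + intros j' Hj'. rewrite Nat.eqb_sym. ring.
Qed.

Lemma NV_1w i : NV r (fun x => Cadd C1 (wv i x)) C1 (fun j => RtoC (Psi i j)).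
Proof. eapply NV_conv. apply (NV_add r _ _ _ _ _ _ (NV_const r C1) (NV_wv i)). ring. intros; cbv beta; ring. Qed.

Lemma NV_zv i : (i < n)%nat -> NV r (zv i) C0 (fun _ => C0).
Proof.
  intro Hi. unfold zv.
  assert (Ht : NV r (fun x => Cpow (x r) (d i)) C0 (fun _ => C0)).
  { eapply NV_conv. apply NV_pow0. eapply NV_conv. apply (NV_var r r ltac:(lia)). reflexivity.
    intros j Hj. cbv beta. destruct (Nat.eqb_spec j r); [lia|reflexivity].
    apply Cpow_C0; auto. reflexivity. }
  eapply NV_conv. apply (NV_mul r _ _ _ _ _ _ Ht (NV_mul r _ _ _ _ _ _ (NV_const r (u0 i)) (NV_1w i))).
  ring. intros; cbv beta; ring.
Qed.

Lemma NV_factor i (p q : nat) : (i < n)%nat ->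
  NV r (fun x => Cmul (Cpow (Cadd C1 (wv i x)) p) (Cpow (Csub C1 (zv i x)) q)) C1 (fun j => RtoC (INR p * Psi i j)).
Proof.
  intro Hi.
  assert (H1 : NV r (fun x => Csub C1 (zv i x)) C1 (fun _ => C0)).
  { eapply NV_conv. apply (NV_sub r _ _ _ _ _ _ (NV_const r C1) (NV_zv i Hi)). ring. intros; cbv beta; ring. }
  eapply NV_conv. apply (NV_mul r _ _ _ _ _ _ (NV_pow1 r _ _ p (NV_1w i)) (NV_pow1 r _ _ q H1)).
  ring. intros. rewrite <- RtoC_mul. ring.
Qed.

Lemma Zsum_IZR n' f : IZR (Zsum n' f) = Rsum n' (fun i => IZR (f i)).
Proof. induction n'; simpl; auto. rewrite plus_IZR, IHn'. reflexivity. Qed.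

Lemma NV_Fk k : (k < r)%nat -> NV r (Fk k) C0 (fun _ => C0).
Proof.
  intro Hk. unfold Fk.
  assert (HP : NV r (Posk k) C1 (fun j => Csum n (fun i => RtoC (INR (ap k i) * Psi i j)))).
  { apply NV_prod. intros i Hi. apply NV_factor; auto. }
  assert (HN : NV r (Negk k) C1 (fun j => Csum n (fun i => RtoC (INR (am k i) * Psi i j)))).
  { apply NV_prod. intros i Hi. apply NV_factor; auto. }
  eapply NV_conv. apply (NV_sub r _ _ _ _ _ _ (NV_var r k ltac:(lia)) (NV_sub r _ _ _ _ _ _ HP HN)).
  - ring.
  - intros j Hj. cbv beta. rewrite !Csum_RtoC, RtoC_sub.
    replace (Rsum n (fun i => INR (ap k i) * Psi i j) - Rsum n (fun i => INR (am k i) * Psi i j))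
      with (Rsum n (fun i => IZR (M k i) * Psi i j)).
    + rewrite HPsi by auto. rewrite (Nat.eqb_sym j k). destruct (Nat.eqb k j); unfold RtoC, C1, C0, Csub, Cadd, Copp; simpl; apply Ceq; ring.
    + rewrite <- Rsum_sub. apply Rsum_ext. intros i Hi. rewrite <- INR_topos. unfold ap, am. ring.
Qed.

Lemma yv_eq k : (k < r)%nat -> Rsum n (fun i => IZR (M k i) * yv i) = IZR (M k (2 * n)%nat).
Proof.
  intro Hk. unfold yv.
  rewrite (Rsum_ext _ _ (fun i => Rsum r (fun k' => IZR (M k i) * Psi i k' * IZR (M k' (2 * n)%nat)))).
  2:{ intros i Hi. rewrite <- Rsum_scal. apply Rsum_ext; intros; ring. }
  rewrite Rsum_exchange.
  rewrite (Rsum_ext _ _ (fun k' => IZR (M k' (2 * n)%nat) * (if Nat.eqb k' k then 1 else 0))).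
  - apply Rsum_delta; auto.
  - intros k' Hk'. rewrite Nat.eqb_sym, <- (HPsi k k' Hk Hk'), <- Rsum_scal. apply Rsum_ext; intros; ring.
Qed.

Lemma join_r s t : join r s t r = t.
Proof. unfold join. rewrite Nat.ltb_irrefl. reflexivity. Qed.

Lemma glue_row k s t : (k < r)%nat -> t <> C0 ->
  (forall i, (i < n)%nat -> Cadd C1 (wv i (join r s t)) <> C0 /\ Csub C1 (zv i (join r s t)) <> C0) ->
  Posk k (join r s t) = Negk k (join r s t) ->
  gluing_monomial n (M k) (fun i => zv i (join r s t)) = sgnZ (M k (2 * n)%nat).
Proof.
  intros Hk Ht Hnz HPN. set (x := join r s t) in *.
  set (v := fun i => Cmul (u0 i) (Cadd C1 (wv i x))).
  assert (Hv : forall i, (i < n)%nat -> v i <> C0).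
  { intros i Hi. apply Cmul_neq0. apply cis_neq0. apply Hnz; auto. }
  assert (Hz : forall i, zv i x = Cmul (Cpow t (d i)) (v i)).
  { intro i. unfold zv, v. change (x r) with (join r s t r). rewrite (join_r s t). reflexivity. }
  assert (Hz0 : forall i, (i < n)%nat -> zv i x <> C0).
  { intros i Hi. rewrite Hz. apply Cmul_neq0. apply Cpow_neq0; auto. auto. }
  unfold gluing_monomial.
  set (E := fun (p q : nat -> nat) i => Cmul (Cpow (zv i x) (p i)) (Cpow (Csub C1 (zv i x)) (q i))).
  assert (HE : forall (p q : nat -> nat) i, (i < n)%nat -> E p q i <> C0).
  { intros p q i Hi. apply Cmul_neq0; apply Cpow_neq0; auto. apply Hnz; auto. }
  rewrite (Cprod_ext n _ (fun i => Cmul (E (ap k) (bp k) i) (Cinv (E (am k) (bm k) i)))).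
  2:{ intros i Hi. unfold E. rewrite !Cpowz_split. unfold ap, am, bp, bm.
      pose proof (Cpow_neq0 _ (Z.to_nat (- M k i)) (Hz0 i Hi)).
      pose proof (Cpow_neq0 _ (Z.to_nat (- M k (n + i)%nat)) (proj2 (Hnz i Hi))).
      field. split; auto. }
  rewrite Cprod_mul, Cprod_inv by auto.
  assert (HEP : forall (p q : nat -> nat), Cprod n (E p q) =
     Cmul (Cmul (Cpow t (natsum n (fun i => d i * p i)%nat)) (Cprod n (fun i => Cpow (u0 i) (p i))))
          (Cprod n (fun i => Cmul (Cpow (Cadd C1 (wv i x)) (p i)) (Cpow (Csub C1 (zv i x)) (q i))))).
  { intros p q. rewrite <- Cprod_pow, <- !Cprod_mul. apply Cprod_ext. intros i Hi. unfold E.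
    rewrite Hz, !Cpow_mul_base. unfold v. rewrite Cpow_mul_base.
    replace (Cpow t (d i * p i)) with (Cpow (Cpow t (d i)) (p i)).
    - rewrite <- Hz. ring.
    - clear. generalize (p i) as q. induction q. rewrite Nat.mul_0_r. reflexivity.
      replace (d i * S q)%nat with (d i + d i * q)%nat by lia. rewrite Cpow_add, <- IHq. reflexivity. }
  rewrite !HEP. fold (Posk k x). fold (Negk k x). rewrite HPN.
  replace (natsum n (fun i => (d i * ap k i)%nat)) with (natsum n (fun i => (d i * am k i)%nat)).
  2:{ pose proof (natsum_diff n (M k) d). rewrite Hdeg in H by auto. unfold ap, am. lia. }
  assert (HNk : Negk k x <> C0).
  { rewrite <- HPN. unfold Posk. apply Cprod_neq0. intros i Hi. apply Cmul_neq0; apply Cpow_neq0; apply Hnz; auto. }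
  assert (HU : Cprod n (fun i => Cpow (u0 i) (am k i)) <> C0).
  { apply Cprod_neq0. intros i Hi. apply Cpow_neq0. apply cis_neq0. }
  pose proof (Cpow_neq0 t (natsum n (fun i => (d i * am k i)%nat)) Ht).
  transitivity (Cmul (Cprod n (fun i => Cpow (u0 i) (ap k i))) (Cinv (Cprod n (fun i => Cpow (u0 i) (am k i))))).
  { field. repeat split; auto. }
  unfold u0. rewrite (Cprod_ext n (fun i => Cpow (cis (yv i * PI)) (ap k i)) (fun i => cis (INR (ap k i) * (yv i * PI)))) by (intros; apply Cpow_cis).
  rewrite (Cprod_ext n (fun i => Cpow (cis (yv i * PI)) (am k i)) (fun i => cis (INR (am k i) * (yv i * PI)))) by (intros; apply Cpow_cis).
  rewrite !Cprod_cis, Cinv_cis, cis_add, sgnZ_cis. f_equal.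
  rewrite <- (yv_eq k Hk), (Rmult_comm _ PI), <- Rsum_scal.
  match goal with |- ?X + - ?Y = _ => replace (X + - Y) with (X - Y) by ring end.
  rewrite <- Rsum_sub.
  apply Rsum_ext. intros i Hi. rewrite <- INR_topos. unfold ap, am. ring.
Qed.
End Main.

Lemma Csum_norm n f : Cnorm (Csum n f) <= Rsum n (fun j => Cnorm (f j)).
Proof. induction n; simpl. rewrite Cnorm_C0; lra. eapply Rle_trans. apply Cnorm_triangle. lra. Qed.

Lemma Rsum_le n f g : (forall i, (i < n)%nat -> f i <= g i) -> Rsum n f <= Rsum n g.
Proof. induction n; intro H; simpl. lra. apply Rplus_le_compat; auto. Qed.

Lemma Rsum_nonneg n f : (forall i, (i < n)%nat -> 0 <= f i) -> 0 <= Rsum n f.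
Proof. intro H. rewrite <- (Rsum_zero n). apply Rsum_le; auto. Qed.

Lemma Rsum_term n f i : (forall j, (j < n)%nat -> 0 <= f j) -> (i < n)%nat -> f i <= Rsum n f.
Proof.
  induction n; intros H Hi. lia. simpl. destruct (Nat.eq_dec i n).
  - subst. assert (0 <= Rsum n f) by (apply Rsum_nonneg; auto). lra.
  - assert (f i <= Rsum n f) by (apply IHn; auto; lia). specialize (H n ltac:(lia)). lra.
Qed.

Lemma wv_bound r Psi i x e : 0 <= e -> bnd r x e -> Cnorm (wv r Psi i x) <= Rsum r (fun j => Rabs (Psi i j)) * e.
Proof.
  intros He Hx. unfold wv. eapply Rle_trans. apply Csum_norm.
  rewrite Rmult_comm, <- Rsum_scal. apply Rsum_le. intros j Hj. rewrite Cnorm_mul, Cnorm_RtoC.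
  pose proof (Hx j Hj); pose proof (Rabs_pos (Psi i j)); nra.
Qed.

Lemma Cnorm_pow_le t d : Cnorm t <= 1 -> (0 < d)%nat -> Cnorm (Cpow t d) <= Cnorm t.
Proof.
  intros H Hd. rewrite Cnorm_pow. destruct d; [lia|]. simpl.
  pose proof (Cnorm_nonneg t). assert (Cnorm t ^ d <= 1) by (rewrite <- (pow1 d); apply pow_incr; lra).
  assert (0 <= Cnorm t ^ d) by (apply pow_le; auto). nra.
Qed.

Lemma inV_Vbar n r M z : in_V n r M z -> in_Vbar n r M z.
Proof.
  intros HV. split.
  - intros i Hi. apply (proj1 HV i Hi).
  - intros eps He. exists z. split; auto. intros i Hi. replace (Csub (z i) (z i)) with C0 by ring. rewrite Cnorm_C0; auto.
Qed.

Lemma Cadd1_neq0 w : Cnorm w < 1 -> Cadd C1 w <> C0.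
Proof.
  intros H E. assert (w = Copp C1) by (transitivity (Csub (Cadd C1 w) C1); [ring|rewrite E; ring]).
  rewrite H0, Cnorm_opp, Cnorm_C1 in H. lra.
Qed.

Lemma Csub1_neq0 w : Cnorm w < 1 -> Csub C1 w <> C0.
Proof. intro H. unfold Csub. apply Cadd1_neq0. rewrite Cnorm_opp. auto. Qed.

Lemma neq_C1 w : Cnorm w < 1 -> w <> C1.
Proof. intros H E. rewrite E, Cnorm_C1 in H. lra. Qed.

Section Constr.
Variables (n r : nat) (M : nat -> nat -> Z) (d : nat -> nat) (Psi : nat -> nat -> R).
Variables (K sg : R) (Sf : C -> nat -> C).
Hypothesis Hn : (0 < n)%nat.
Hypothesis Hd : forall i, (i < n)%nat -> (0 < d i)%nat.
Hypothesis Hdeg : forall k, (k < r)%nat -> Zsum n (fun j => (M k j * Z.of_nat (d j))%Z) = 0%Z.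
Hypothesis HPsi : forall k k', (k < r)%nat -> (k' < r)%nat ->
    Rsum n (fun i => IZR (M k i) * Psi i k') = (if Nat.eqb k k' then 1 else 0).
Hypothesis HK1 : 1 <= K.
Hypothesis Hsg0 : 0 < sg.
Hypothesis Hsg1 : sg <= 1 / 2.
Hypothesis HPB : forall i, (i < n)%nat -> Rsum r (fun j => Rabs (Psi i j)) * sg <= 1 / 12.
Hypothesis HSf : forall t, Cnorm t <= rho K sg ->
  bnd r (Sf t) sg /\ forall k, (k < r)%nat -> Fk n r M d Psi k (join r (Sf t) t) = Sf t k.

Let rh := rho K sg.
Lemma rh_pos : 0 < rh.
Proof. unfold rh, rho. apply Rdiv_lt_0_compat; lra. Qed.
Lemma rh_le : rh <= sg / 8.
Proof. unfold rh, rho. apply Rmult_le_compat_l. lra. apply Rinv_le_contravar; lra. Qed.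

Let X t := join r (Sf t) t.

Lemma bnd_X t : Cnorm t <= rh -> bnd r (X t) sg.
Proof. intros Ht j Hj. unfold X, join. destruct (Nat.ltb_spec j r); [|lia]. apply (proj1 (HSf t Ht)); auto. Qed.

Lemma w_small t i : Cnorm t <= rh -> (i < n)%nat -> Cnorm (wv r Psi i (X t)) <= 1 / 12.
Proof. intros Ht Hi. eapply Rle_trans. apply (wv_bound r Psi i (X t) sg). lra. apply bnd_X; auto. apply HPB; auto. Qed.

Lemma z_small t i : Cnorm t <= rh -> (i < n)%nat -> Cnorm (zv n r M d Psi i (X t)) <= 2 * Cnorm t.
Proof.
  intros Ht Hi. pose proof rh_pos. pose proof rh_le. unfold zv.
  replace (X t r) with t by (unfold X; symmetry; apply join_r).
  rewrite !Cnorm_mul. unfold u0. rewrite Cnorm_cis.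
  assert (A : Cnorm (Cpow t (d i)) <= Cnorm t) by (apply Cnorm_pow_le; auto; lra).
  assert (B : Cnorm (Cadd C1 (wv r Psi i (X t))) <= 2).
  { eapply Rle_trans. apply Cnorm_triangle. rewrite Cnorm_C1. pose proof (w_small t i Ht Hi). lra. }
  pose proof (Cnorm_nonneg (Cpow t (d i))). pose proof (Cnorm_nonneg (Cadd C1 (wv r Psi i (X t)))).
  pose proof (Cnorm_nonneg t). nra.
Qed.

Lemma z_lt1 t i : Cnorm t <= rh -> (i < n)%nat -> Cnorm (zv n r M d Psi i (X t)) < 1.
Proof. intros Ht Hi. pose proof (z_small t i Ht Hi). pose proof rh_le. lra. Qed.

Lemma PN t k : Cnorm t <= rh -> (k < r)%nat -> Posk n r M d Psi k (X t) = Negk n r M d Psi k (X t).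
Proof.
  intros Ht Hk. pose proof (proj2 (HSf t Ht) k Hk) as E. unfold Fk in E. fold (X t) in E.
  assert (Xk : X t k = Sf t k) by (unfold X, join; destruct (Nat.ltb_spec k r); [auto|lia]).
  rewrite Xk in E. transitivity (Cadd (Csub (Posk n r M d Psi k (X t)) (Negk n r M d Psi k (X t))) (Negk n r M d Psi k (X t))).
  ring. replace (Csub (Posk n r M d Psi k (X t)) (Negk n r M d Psi k (X t))) with C0. ring.
  transitivity (Csub (Sf t k) (Csub (Sf t k) (Csub (Posk n r M d Psi k (X t)) (Negk n r M d Psi k (X t))))). rewrite E. ring. ring.
Qed.

Lemma inV_X t : Cnorm t <= rh -> t <> C0 -> in_V n r M (fun i => zv n r M d Psi i (X t)).
Proof.
  intros Ht Ht0.
  assert (Hw : forall i, (i < n)%nat -> Cadd C1 (wv r Psi i (X t)) <> C0).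
  { intros i Hi. apply Cadd1_neq0. pose proof (w_small t i Ht Hi). lra. }
  assert (Hz : forall i, (i < n)%nat -> zv n r M d Psi i (X t) <> C0).
  { intros i Hi. unfold zv. replace (X t r) with t by (unfold X; symmetry; apply join_r).
    apply Cmul_neq0. apply Cpow_neq0; auto. apply Cmul_neq0. apply cis_neq0. auto. }
  split.
  - intros i Hi. split; auto. apply neq_C1. apply z_lt1; auto.
  - apply lattice_closure.
    + intros i Hi. split; auto. apply Csub1_neq0. apply z_lt1; auto.
    + intros k Hk. apply glue_row; auto.
      * intros i Hi. split. apply Hw; auto. apply Csub1_neq0. apply z_lt1; auto.
      * apply PN; auto.
Qed.

Hypothesis HSd : forall t0, Cnorm t0 < rh -> exists (l : nat -> C) (Cc : R), 0 <= Cc /\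
  forall h, Cnorm h <= rh - Cnorm t0 -> forall k, (k < r)%nat ->
    Cnorm (Csub (Csub (Sf (Cadd t0 h) k) (Sf t0 k)) (Cmul h (l k))) <= Cc * (Cnorm h * Cnorm h).

Let G i := Cmul (Cpow (RtoC rh) (d i)) (u0 n r M Psi i).
Let uf i tau := Cmul (G i) (Cadd C1 (wv r Psi i (X (Cmul (RtoC rh) tau)))).

Lemma Cnorm_rh tau : Cnorm (Cmul (RtoC rh) tau) = rh * Cnorm tau.
Proof. rewrite Cnorm_mul, Cnorm_RtoC, Rabs_right. reflexivity. pose proof rh_pos; lra. Qed.

Lemma f_eq tau i : Cmul (Cpow tau (d i)) (uf i tau) = zv n r M d Psi i (X (Cmul (RtoC rh) tau)).
Proof.
  unfold uf, G, zv. replace (X (Cmul (RtoC rh) tau) r) with (Cmul (RtoC rh) tau) by (unfold X; symmetry; apply join_r).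
  rewrite Cpow_mul_base. ring.
Qed.

Lemma G_le1 i : Cnorm (G i) <= 1.
Proof.
  unfold G, u0. rewrite Cnorm_mul, Cnorm_cis, Cnorm_pow, Cnorm_RtoC, Rabs_right.
  rewrite Rmult_1_r. rewrite <- (pow1 (d i)). apply pow_incr. pose proof rh_pos; pose proof rh_le. lra.
  pose proof rh_pos; lra.
Qed.

Lemma G_neq0 i : G i <> C0.
Proof. unfold G. apply Cmul_neq0. apply Cpow_neq0. intro E. injection E; intros. pose proof rh_pos. lra. apply cis_neq0. Qed.

Lemma wv_diff i a b : wv r Psi i (X a) = Cadd (wv r Psi i (X b)) (Csum r (fun j => Cmul (RtoC (Psi i j)) (Csub (Sf a j) (Sf b j)))).
Proof.
  unfold wv. rewrite <- Csum_add. apply Csum_ext. intros j Hj. unfold X, join.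
  destruct (Nat.ltb_spec j r); [|lia]. ring.
Qed.

Lemma holo i : (i < n)%nat -> holomorphic_on_disc (uf i).
Proof.
  intros Hi tau Htau. unfold in_disc in Htau. pose proof rh_pos as Hrp. pose proof rh_le as Hrl.
  set (t0 := Cmul (RtoC rh) tau).
  assert (Ht0 : Cnorm t0 < rh).
  { unfold t0. rewrite Cnorm_rh. pose proof (Cnorm_nonneg tau). nra. }
  destruct (HSd t0 Ht0) as [l [Cc [HCc Hl]]].
  exists (Cmul (G i) (Csum r (fun j => Cmul (RtoC (Psi i j)) (Cmul (RtoC rh) (l j))))).
  intros eps Heps.
  set (PBi := Rsum r (fun j => Rabs (Psi i j))).
  assert (HPBi : 0 <= PBi) by (apply Rsum_nonneg; intros; apply Rabs_pos).
  set (Q := PBi * Cc * rh * rh + 1).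
  assert (HQ0 : 0 <= PBi * Cc * rh * rh).
  { apply Rmult_le_pos; [apply Rmult_le_pos; [apply Rmult_le_pos|]|]; lra. }
  assert (HQ : 1 <= Q) by (unfold Q; lra).
  exists (Rmin ((rh - Cnorm t0) / rh) (eps / Q)). split.
  { apply Rmin_glb_lt; apply Rdiv_lt_0_compat; lra. }
  intros h [Hh0 Hhd].
  assert (Hh : h <> C0) by (intro E; rewrite E, Cnorm_C0 in Hh0; lra).
  assert (Hhd1 : Cnorm h < (rh - Cnorm t0) / rh) by (eapply Rlt_le_trans; [apply Hhd|apply Rmin_l]).
  assert (Hhd2 : Cnorm h < eps / Q) by (eapply Rlt_le_trans; [apply Hhd|apply Rmin_r]).
  set (h' := Cmul (RtoC rh) h).
  assert (Hh' : Cnorm h' <= rh - Cnorm t0).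
  { unfold h'. rewrite Cnorm_rh. apply (Rmult_lt_compat_l rh) in Hhd1; auto.
    replace (rh * ((rh - Cnorm t0) / rh)) with (rh - Cnorm t0) in Hhd1 by (field; lra). lra. }
  assert (Ekey : Cmul (RtoC rh) (Cadd tau h) = Cadd t0 h') by (unfold t0, h'; ring).
  unfold uf. rewrite Ekey. fold t0. rewrite (wv_diff i (Cadd t0 h') t0).
  set (SD := Csum r (fun j => Cmul (RtoC (Psi i j)) (Csub (Sf (Cadd t0 h') j) (Sf t0 j)))).
  set (SL := Csum r (fun j => Cmul (RtoC (Psi i j)) (l j))).
  set (SR := Csum r (fun j => Cmul (RtoC (Psi i j)) (Csub (Csub (Sf (Cadd t0 h') j) (Sf t0 j)) (Cmul h' (l j))))).
  assert (E1 : Csum r (fun j => Cmul (RtoC (Psi i j)) (Cmul (RtoC rh) (l j))) = Cmul (RtoC rh) SL).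
  { unfold SL. rewrite <- Csum_scal. apply Csum_ext; intros; ring. }
  assert (E2 : SR = Csub SD (Cmul h' SL)).
  { unfold SR, SD, SL. rewrite <- Csum_scal, <- Csum_sub. apply Csum_ext; intros; ring. }
  rewrite E1.
  replace (Csub (Cmul (Csub (Cmul (G i) (Cadd C1 (Cadd (wv r Psi i (X t0)) SD))) (Cmul (G i) (Cadd C1 (wv r Psi i (X t0))))) (Cinv h)) (Cmul (G i) (Cmul (RtoC rh) SL)))
    with (Cmul (Cmul (G i) (Cinv h)) SR).
  2:{ rewrite E2. unfold h'. field. auto. }
  rewrite !Cnorm_mul, Cnorm_inv by auto.
  assert (HSR : Cnorm SR <= PBi * (Cc * (Cnorm h' * Cnorm h'))).
  { unfold SR. eapply Rle_trans. apply Csum_norm. unfold PBi. rewrite Rmult_comm, <- Rsum_scal. apply Rsum_le.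
    intros j Hj. rewrite Cnorm_mul, Cnorm_RtoC. rewrite Rmult_comm. apply Rmult_le_compat_r. apply Rabs_pos. apply Hl; auto. }
  assert (Hh'n : Cnorm h' = rh * Cnorm h) by (unfold h'; apply Cnorm_rh).
  rewrite Hh'n in HSR.
  pose proof (G_le1 i). pose proof (Cnorm_nonneg (G i)). pose proof (Cnorm_nonneg SR).
  assert (HI : / Cnorm h * Cnorm SR <= PBi * Cc * rh * rh * Cnorm h).
  { apply (Rmult_le_reg_l (Cnorm h)); auto. rewrite <- Rmult_assoc, Rinv_r by lra. nra. }
  assert (0 <= / Cnorm h * Cnorm SR) by (apply Rmult_le_pos; [left; apply Rinv_0_lt_compat; lra|lra]).
  assert (Cnorm h * Q < eps) by (apply (Rmult_lt_compat_r Q) in Hhd2; [|lra]; unfold Rdiv in Hhd2; rewrite Rmult_assoc, Rinv_l, Rmult_1_r in Hhd2 by lra; lra).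
  assert (Cnorm (G i) * / Cnorm h * Cnorm SR <= / Cnorm h * Cnorm SR).
  { rewrite Rmult_assoc. rewrite <- (Rmult_1_l (/ Cnorm h * Cnorm SR)) at 2. apply Rmult_le_compat_r; lra. }
  unfold Q in *. nra.
Qed.


Lemma genuine_c : genuine n r M d.
Proof.
  pose proof rh_pos as Hrp. pose proof rh_le as Hrl.
  set (p := fun i => Cmul (Cpow C0 (d i)) (uf i C0)).
  assert (Hp : forall i, (i < n)%nat -> p i = C0).
  { intros i Hi. unfold p. rewrite Cpow_C0 by auto. ring. }
  assert (HVt : forall tau, in_disc tau -> tau <> C0 -> in_V n r M (fun i => Cmul (Cpow tau (d i)) (uf i tau))).
  { intros tau Ht Ht0. unfold in_disc in Ht.
    replace (fun i => Cmul (Cpow tau (d i)) (uf i tau)) with (fun i => zv n r M d Psi i (X (Cmul (RtoC rh) tau))).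
    2:{ apply functional_extensionality; intro i. rewrite f_eq. reflexivity. }
    apply inV_X. rewrite Cnorm_rh. pose proof (Cnorm_nonneg tau). nra.
    apply Cmul_neq0; auto. intro E; injection E; intros; lra. }
  assert (HVbar : in_Vbar n r M p).
  { split.
    - intros i Hi. rewrite Hp by auto. intro E. apply C1_neq_C0. auto.
    - intros eps Heps. set (tau := RtoC (Rmin (1/2) (eps/4))).
      assert (Htn : Cnorm tau = Rmin (1/2) (eps/4)).
      { unfold tau. rewrite Cnorm_RtoC, Rabs_right. auto. apply Rle_ge, Rmin_glb; lra. }
      assert (Htpos : 0 < Rmin (1/2) (eps/4)) by (apply Rmin_glb_lt; lra).
      assert (Hdisc : in_disc tau) by (unfold in_disc; rewrite Htn; pose proof (Rmin_l (1/2) (eps/4)); lra).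
      assert (Hne : tau <> C0) by (intro E; rewrite E, Cnorm_C0 in Htn; lra).
      exists (fun i => Cmul (Cpow tau (d i)) (uf i tau)). split. apply HVt; auto.
      intros i Hi. rewrite Hp, f_eq by auto. replace (Csub _ C0) with (zv n r M d Psi i (X (Cmul (RtoC rh) tau))) by ring.
      eapply Rle_lt_trans. apply z_small; auto. rewrite Cnorm_rh, Htn. pose proof (Rmin_l (1/2) (eps/4)). nra.
      rewrite Cnorm_rh, Htn. pose proof (Rmin_r (1/2) (eps/4)). nra. }
  exists p, uf. split; [|split].
  - split; auto. intros [HV _]. destruct (HV 0%nat Hn) as [H0 _]. apply H0. apply Hp; auto.
  - intros i Hi. split; [|split].
    + apply holo; auto.
    + unfold uf. apply Cmul_neq0. apply G_neq0. apply Cadd1_neq0.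
      assert (Cnorm (Cmul (RtoC rh) C0) <= rh) by (rewrite Cnorm_rh, Cnorm_C0; lra).
      pose proof (w_small _ i H Hi). lra.
    + intro E. specialize (Hd i Hi). lia.
  - cbv zeta. split; [|split].
    + intros i Hi. reflexivity.
    + intros t Ht. destruct (classic (t = C0)) as [E|E].
      * subst t. exact HVbar.
      * apply inV_Vbar. apply HVt; auto.
    + intros t Ht Ht0. apply HVt; auto.
Qed.
End Constr.

Theorem mainTheorem6 (n r : nat) (M : nat -> nat -> Z) (d : nat -> nat) :
  (r <= n - 1)%nat ->
  rows_Z_indep r (2 * n + 1) M ->
  degeneration_vector n r M d ->
  (forall i, (i < n)%nat -> (0 < d i)%nat) ->
  mat_rank r n (blockA M) (n - 1) ->
  genuine n r M d.
Proof.
  intros Hr _ [[i0 [Hi0 _]] Hdeg] Hpos Hrank.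
  assert (Hn : (0 < n)%nat) by lia.
  destruct (select_rows n r M Hr Hrank) as [Psi HPsi].
  set (Fs := Fk n r M d Psi).
  assert (HD : forall k, exists D, (k < r)%nat -> Nice (S r) (Fs k) D /\ Fs k zeroV = C0 /\ forall j, (j < r)%nat -> D j zeroV = C0).
  { intro k. destruct (lt_dec k r) as [Hk|Hk].
    - destruct (NV_Fk n r M d Psi Hpos HPsi k Hk) as (D & H1 & H2 & H3). exists D. intros _. auto.
    - exists (fun _ _ => C0). intro; lia. }
  destruct (functional_choice _ HD) as [DF HDF].
  destruct (Nice_uniform (S r) r Fs DF (fun k Hk => proj1 (HDF k Hk))) as [K [HK1 HKn]].
  set (PB := 1 + Rsum n (fun i => Rsum r (fun j => Rabs (Psi i j)))).
  assert (HPB : 1 <= PB).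
  { unfold PB. assert (0 <= Rsum n (fun i => Rsum r (fun j => Rabs (Psi i j)))); [|lra].
    apply Rsum_nonneg. intros. apply Rsum_nonneg. intros. apply Rabs_pos. }
  pose proof (pos_INR r) as Hr0.
  set (sg := 1 / (4 * (INR r + 3) * K * PB)).
  assert (Hden : 12 <= 4 * (INR r + 3) * K * PB).
  { assert (12 <= 4 * (INR r + 3)) by lra. assert (1 <= K * PB) by nra. nra. }
  assert (Hsg0 : 0 < sg) by (unfold sg; apply Rdiv_lt_0_compat; lra).
  assert (Hsg1 : sg <= 1 / 2).
  { unfold sg. unfold Rdiv. rewrite !Rmult_1_l. apply Rinv_le_contravar; lra. }
  assert (Hsg2 : (INR r + 3) * K * sg <= 1 / 4).
  { unfold sg. replace ((INR r + 3) * K * (1 / (4 * (INR r + 3) * K * PB))) with (1 / (4 * PB)) by (field; lra).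
    unfold Rdiv. rewrite !Rmult_1_l. apply Rinv_le_contravar; lra. }
  assert (HPBi : forall i, (i < n)%nat -> Rsum r (fun j => Rabs (Psi i j)) * sg <= 1 / 12).
  { intros i Hi. assert (Rsum r (fun j => Rabs (Psi i j)) <= PB).
    { unfold PB. pose proof (Rsum_term n (fun i => Rsum r (fun j => Rabs (Psi i j))) i).
      assert (Rsum r (fun j => Rabs (Psi i j)) <= Rsum n (fun i => Rsum r (fun j => Rabs (Psi i j)))).
      { apply H; auto. intros. apply Rsum_nonneg. intros. apply Rabs_pos. }
      lra. }
    assert (PB * sg <= 1 / 12).
    { unfold sg. replace (PB * (1 / (4 * (INR r + 3) * K * PB))) with (1 / (4 * (INR r + 3) * K)) by (field; lra).
      unfold Rdiv. rewrite !Rmult_1_l. apply Rinv_le_contravar; nra. }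
    nra. }
  assert (HF0 : forall k, (k < r)%nat -> Fs k (fun _ => C0) = C0) by (intros k Hk; apply (HDF k Hk)).
  assert (HDF0 : forall k j, (k < r)%nat -> (j < r)%nat -> DF k j (fun _ => C0) = C0) by (intros k j Hk Hj; apply (HDF k Hk); auto).
  assert (HSe : forall t, exists s, Cnorm t <= rho K sg -> bnd r s sg /\ forall k, (k < r)%nat -> Fs k (join r s t) = s k).
  { intro t. destruct (Rle_dec (Cnorm t) (rho K sg)) as [Ht|Ht].
    - destruct (fixed_exists r Fs DF K HK1 HKn HF0 HDF0 sg Hsg0 Hsg1 Hsg2 t Ht) as [s Hs]. exists s; auto.
    - exists (fun _ => C0). intro; lra. }
  destruct (functional_choice _ HSe) as [Sf HSf].
  apply (genuine_c n r M d Psi K sg Sf Hn Hpos Hdeg HPsi HK1 Hsg0 Hsg1 HPBi HSf).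
  apply (S_diff r Fs DF K HK1 HKn HDF0 sg Hsg0 Hsg1 Hsg2 Sf HSf).
Qed.
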